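(* For every (probabilistically) guarded nondeterministic expression $E$ there is a guarded standard equation system $\mathcal S$, all of whose free variables lie in the set of free variables of $E$, such that $E$ satisfies $\mathcal S$.
   Context: Fix a set $\mathsf{Act}$ of actions containing $\tau$ and a set $\mathsf{Var}$ of variables. Nondeterministic expressions: $E ::= 0 \mid X \mid \alpha.P \mid \mathrm{rec}\,X.E \mid E + E$; probabilistic expressions: $P ::= \partial(E) \mid P \oplus_p P$ ($0<p<1$); $\bigoplus_{k}p_kE_k$ is an iterated $\oplus$ of $\partial(E_k)$ giving $E_k$ probability $p_k$. Subdistributions, Dirac $\delta$, operational semantics: least relations with $\partial(E)\mapsto\delta_E$; $P\oplus_pQ\mapsto p\mu+(1-p)\nu$ if $P\mapsto\mu,Q\mapsto\nu$; $\alpha.P\xrightarrow{\alpha}\mu$ if $P\mapsto\mu$; $\mathrm{rec}\,X.E\xrightarrow{\alpha}\mu$ if $E[\mathrm{rec}\,X.E/X]\xrightarrow{\alpha}\mu$; $E+F\xrightarrow{\alpha}\mu$ and $F+E\xrightarrow{\alpha}\mu$ if $E\xrightarrow{\alpha}\mu$. Probabilistic unguardedness $E\rhd V$ is the least relation with: $X\rhd\{X\}$; $\tau.P\rhd V$ if $P\rhd V$; $\mathrm{rec}\,Y.E\rhd V\setminus\{Y\}$ if $E\rhd V$ and $V\ne\{Y\}$; $E+F\rhd V$ if $E\rhd V$; $E+F\rhd W$ if $F\rhd W$; $\partial(E)\rhd V$ if $E\rhd V$; $P\oplus_pQ\rhd V\cup W$ if $P\rhd V$, $Q\rhd W$. An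 expression is guarded if for every subterm $\mathrm{rec}\,X.F$, not $F\rhd\{X\}$. Provable equality $=$: least equivalence and congruence on expressions, allowing renaming of bound variables, containing all instances of the axiom schemes N1–N4, P1–P3, T1–T4, C, R1, R3–R6 and closed under R2, namely: $E+F=F+E$; $E+(F+G)=(E+F)+G$; $E+E=E$; $E+0=E$; $P\oplus_pQ=Q\oplus_{1-p}P$; $P\oplus_p(Q\oplus_{q/(1-p)}R)=(P\oplus_{p/(p+q)}Q)\oplus_{p+q}R$; $P\oplus_pP=P$; $\alpha.(\partial(\tau.\partial(E))\oplus_pP)=\alpha.(\partial(E)\oplus_pP)$; $\tau.\bigoplus_ip_i(E_i+F)+F=\tau.\bigoplus_ip_i(E_i+F)$; $\tau.\bigoplus_ip_i(E_i+\alpha.P_i)+\alpha.\bigoplus_ip_iP_i=\tau.\bigoplus_ip_i(E_i+\alpha.P_i)$; $\alpha.\bigoplus_ip_i(E_i+\tau.P_i)+\alpha.\bigoplus_ip_iP_i=\alpha.\bigoplus_ip_i(E_i+\tau.P_i)$; $\alpha.P+\alpha.Q=\alpha.P+\alpha.(P\oplus_pQ)+\alpha.Q$; $\mathrm{rec}\,X.E=E[\mathrm{rec}\,X.E/X]$; (R2) if $F=E[F/X]$ and not $E\rhd\{X\}$ then $F=\mathrm{rec}\,X.E$; $\mathrm{rec}\,X.(\tau.(\partial(X+E)\oplus_pP)+F)=\mathrm{rec}\,X.(\tau.(\partial(X+E)\oplus_pP)+\tau.P+F)$; $\mathrm{rec}\,X.(X+E)=\mathrm{rec}\,X.E$; $\mathrm{rec}\,X.(\tau.\partial(X)+E)=\mathrm{rec}\,X.\tau.\partial(E)$;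 $\mathrm{rec}\,X.(\tau.\bigoplus_ip_i(X+E_i)+F)=\mathrm{rec}\,X.(\tau.\partial(X)+\sum_iE_i+F)$. An equation system $\mathcal S:\vec X=\vec S$ consists of distinct formal variables $\vec X=(X_1,\dots,X_n)$ and expressions $\vec S=(S_1,\dots,S_n)$; its free variables $\mathrm{Var}(\mathcal S)$ are the non-formal variables occurring in the $S_i$. It is standard if each $S_i$ has the form $\sum_j\alpha_{i,j}.\bigoplus_{k=1}^np_{i,j,k}X_k+\sum_jV_{i,j}$ with $V_{i,j}\in\mathrm{Var}(\mathcal S)$. $\mathcal S$ is satisfied by $E$ if there are expressions $E_1,\dots,E_n$ with $E$ syntactically equal to $E_1$ and $E_i=S_i[\vec E/\vec X]$ provable for all $i$. For a standard $\mathcal S$, define $X_i\xrightarrow{\alpha}_{\mathcal S}\mu$ (with $\mu$ a distribution over $\{X_1,\dots,X_n\}$) iff $S_i\xrightarrow{\alpha}\mu$; combined transitions, derivations and weak transitions $\Rightarrow_{\mathcal S}$, $\xRightarrow{\alpha}_{\mathcal S}$ are defined from this relation: combined transitions are the least relation with $\delta_{X_i}\xrightarrow{\alpha}\mu$ for $X_i\xrightarrow{\alpha}_{\mathcal S}\mu$ closed under sub-convex combinations; a derivation is $(\mu_i^{\to},\mu_i^{\times})_i$ with $\mu_i^{\to}\xrightarrow{\tau}\mu_{i+1}^{\to}+\mu_{i+1}^{\times}$; $\mu\Rightarrow_{\mathcal S}\nu$ iff some derivation has $\mu=\mu_0^\to+\mu_0^\times$ and $\nu=\sum_i\mu_i^\times$;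 $\xRightarrow{\alpha}_{\mathcal S}$ is $\Rightarrow_{\mathcal S}\xrightarrow{\alpha}\Rightarrow_{\mathcal S}$. A standard $\mathcal S$ is guarded if there is no $i$ with $\delta_{X_i}\xRightarrow{\tau}_{\mathcal S}\delta_{X_i}$. *)

(* Defs.v *)
From Stdlib Require Import Reals List Lra.
Import ListNotations.
Open Scope R_scope.

Set Implicit Arguments.

Section ProbCCS.

Context (L : Type).

Inductive act : Type := Tau | Vis (l : L).

(* Locally nameless syntax: free variables are names (nat), variables bound
   by rec are de Bruijn indices (NBV).  rec X.E is NRec E where X is NBV 0
   in E.  Probabilities are reals; well-formedness (0<p<1) is the predicate
   [probsN] below. *)
Inductive nexp : Type :=
| NNil : nexp
| NFV : nat -> nexp
| NBV : nat -> nexp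
| NPre : act -> pexp -> nexp
| NRec : nexp -> nexp
| NSum : nexp -> nexp -> nexp
with pexp : Type :=
| PDirac : nexp -> pexp
| POplus : R -> pexp -> pexp -> pexp.

Fixpoint openN (k : nat) (u : nexp) (E : nexp) : nexp :=
  match E with
  | NNil => NNil
  | NFV x => NFV x
  | NBV n => if Nat.eqb n k then u else NBV n
  | NPre a P => NPre a (openP k u P)
  | NRec F => NRec (openN (S k) u F)
  | NSum F G => NSum (openN k u F) (openN k u G)
  end
with openP (k : nat) (u : nexp) (P : pexp) : pexp :=
  match P with
  | PDirac F => PDirac (openN k u F)
  | POplus p P Q => POplus p (openP k u P) (openP k u Q)
  end.

(* E[u/X] for a body E of rec X.E *)
Definition open (E u : nexp) : nexp := openN 0%nat u E.

Fixpoint lcN (k : nat) (E : nexp) : Prop :=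
  match E with
  | NNil => True
  | NFV _ => True
  | NBV n => (n < k)%nat
  | NPre _ P => lcP k P
  | NRec F => lcN (S k) F
  | NSum F G => lcN k F /\ lcN k G
  end
with lcP (k : nat) (P : pexp) : Prop :=
  match P with
  | PDirac F => lcN k F
  | POplus _ P Q => lcP k P /\ lcP k Q
  end.

Fixpoint probsN (E : nexp) : Prop :=
  match E with
  | NNil | NFV _ | NBV _ => True
  | NPre _ P => probsP P
  | NRec F => probsN F
  | NSum F G => probsN F /\ probsN G
  end
with probsP (P : pexp) : Prop :=
  match P with
  | PDirac F => probsN F
  | POplus p P Q => (0 < p < 1) /\ probsP P /\ probsP Q
  end.

Definition expr (E : nexp) : Prop := lcN 0%nat E /\ probsN E.

Fixpoint fvN (E : nexp) : list nat :=
  match E with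
  | NNil | NBV _ => []
  | NFV x => [x]
  | NPre _ P => fvP P
  | NRec F => fvN F
  | NSum F G => fvN F ++ fvN G
  end
with fvP (P : pexp) : list nat :=
  match P with
  | PDirac F => fvN F
  | POplus _ P Q => fvP P ++ fvP Q
  end.

Fixpoint fsubstN (s : nat -> nexp) (E : nexp) : nexp :=
  match E with
  | NNil => NNil
  | NFV x => s x
  | NBV n => NBV n
  | NPre a P => NPre a (fsubstP s P)
  | NRec F => NRec (fsubstN s F)
  | NSum F G => NSum (fsubstN s F) (fsubstN s G)
  end
with fsubstP (s : nat -> nexp) (P : pexp) : pexp :=
  match P with
  | PDirac F => PDirac (fsubstN s F)
  | POplus p P Q => POplus p (fsubstP s P) (fsubstP s Q)
  end.

(* variables: inl n = bound index n, inr x = free name x *)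
Definition var := (nat + nat)%type.

Definition unshift (V : list var) : list var :=
  flat_map (fun v => match v with
                     | inl O => []
                     | inl (S n) => [inl n]
                     | inr x => [inr x]
                     end) V.

Definition seteq (V W : list var) : Prop := forall v, In v V <-> In v W.

Inductive UGN : nexp -> list var -> Prop :=
| ug_fv x : UGN (NFV x) [inr x]
| ug_bv n : UGN (NBV n) [inl n]
| ug_tau P V : UGP P V -> UGN (NPre Tau P) V
| ug_rec E V : UGN E V -> ~ seteq V [inl 0%nat] -> UGN (NRec E) (unshift V)
| ug_suml E F V : UGN E V -> UGN (NSum E F) V
| ug_sumr E F W : UGN F W -> UGN (NSum E F) W
with UGP : pexp -> list var -> Prop :=
| ug_dirac E V : UGN E V -> UGP (PDirac E) V
| ug_oplus p P Q V W : UGP P V -> UGP Q W -> UGP (POplus p P Q) (V ++ W).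

Definition unguarded_in (E : nexp) (v : var) : Prop :=
  exists V, UGN E V /\ seteq V [v].

Fixpoint guardedN (E : nexp) : Prop :=
  match E with
  | NNil | NFV _ | NBV _ => True
  | NPre _ P => guardedP P
  | NRec F => ~ unguarded_in F (inl 0%nat) /\ guardedN F
  | NSum F G => guardedN F /\ guardedN G
  end
with guardedP (P : pexp) : Prop :=
  match P with
  | PDirac F => guardedN F
  | POplus _ P Q => guardedP P /\ guardedP Q
  end.

(* oplusL [(p1,P1);...;(pk,Pk)] = P1 (+)_{p1} (P2 (+)_{p2/(1-p1)} ( ... Pk)) *)
Fixpoint oplusAux (s : R) (l : list (R * pexp)) : pexp :=
  match l with
  | [] => PDirac NNil
  | [(_, P)] => P
  | (p, P) :: l' => POplus (p / s) P (oplusAux (s - p) l')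
  end.

Definition oplusL (l : list (R * pexp)) : pexp := oplusAux 1 l.

Definition validW (ws : list R) : Prop :=
  ws <> [] /\ Forall (fun p => 0 < p) ws /\ fold_right Rplus 0 ws = 1.

Fixpoint sumL (l : list nexp) : nexp :=
  match l with
  | [] => NNil
  | [E] => E
  | E :: l' => NSum E (sumL l')
  end.

Inductive eqN : nexp -> nexp -> Prop :=
| eqN_refl E : eqN E E
| eqN_sym E F : eqN E F -> eqN F E
| eqN_trans E F G : eqN E F -> eqN F G -> eqN E G
| eqN_pre a P Q : eqP P Q -> eqN (NPre a P) (NPre a Q)
| eqN_sum E E' F F' : eqN E E' -> eqN F F' -> eqN (NSum E F) (NSum E' F')
| eqN_rec E F x : ~ In x (fvN E ++ fvN F) ->
    eqN (open E (NFV x)) (open F (NFV x)) -> eqN (NRec E) (NRec F)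
| ax_N1 E F : eqN (NSum E F) (NSum F E)
| ax_N2 E F G : eqN (NSum E (NSum F G)) (NSum (NSum E F) G)
| ax_N3 E : eqN (NSum E E) E
| ax_N4 E : eqN (NSum E NNil) E
| ax_T1 a p E P : 0 < p < 1 ->
    eqN (NPre a (POplus p (PDirac (NPre Tau (PDirac E))) P))
        (NPre a (POplus p (PDirac E) P))
| ax_T2 (l : list (R * nexp)) F : validW (map fst l) ->
    eqN (NSum (NPre Tau (oplusL (map (fun pe => (fst pe, PDirac (NSum (snd pe) F))) l))) F)
        (NPre Tau (oplusL (map (fun pe => (fst pe, PDirac (NSum (snd pe) F))) l)))
| ax_T3 (l : list (R * nexp * pexp)) a : validW (map (fun t => fst (fst t)) l) ->
    eqN (NSum (NPre Tau (oplusL (map (fun t =>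
                 (fst (fst t), PDirac (NSum (snd (fst t)) (NPre a (snd t))))) l)))
              (NPre a (oplusL (map (fun t => (fst (fst t), snd t)) l))))
        (NPre Tau (oplusL (map (fun t =>
                 (fst (fst t), PDirac (NSum (snd (fst t)) (NPre a (snd t))))) l)))
| ax_T4 (l : list (R * nexp * pexp)) a : validW (map (fun t => fst (fst t)) l) ->
    eqN (NSum (NPre a (oplusL (map (fun t =>
                 (fst (fst t), PDirac (NSum (snd (fst t)) (NPre Tau (snd t))))) l)))
              (NPre a (oplusL (map (fun t => (fst (fst t), snd t)) l))))
        (NPre a (oplusL (map (fun t =>
                 (fst (fst t), PDirac (NSum (snd (fst t)) (NPre Tau (snd t))))) l)))
| ax_C a p P Q : 0 < p < 1 ->
    eqN (NSum (NPre a P) (NPre a Q))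
        (NSum (NSum (NPre a P) (NPre a (POplus p P Q))) (NPre a Q))
| ax_R1 E : lcN 0%nat (NRec E) -> eqN (NRec E) (open E (NRec E))
| ax_R2 E F : lcN 0%nat F -> lcN 1%nat E -> eqN F (open E F) ->
    ~ unguarded_in E (inl 0%nat) -> eqN F (NRec E)
| ax_R3 E : eqN (NRec (NSum (NBV 0%nat) E)) (NRec E)
| ax_R4 p E P F : 0 < p < 1 ->
    eqN (NRec (NSum (NPre Tau (POplus p (PDirac (NSum (NBV 0%nat) E)) P)) F))
        (NRec (NSum (NSum (NPre Tau (POplus p (PDirac (NSum (NBV 0%nat) E)) P))
                          (NPre Tau P)) F))
| ax_R5 E : eqN (NRec (NSum (NPre Tau (PDirac (NBV 0%nat))) E))
                (NRec (NPre Tau (PDirac E)))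
| ax_R6 (l : list (R * nexp)) F : validW (map fst l) ->
    eqN (NRec (NSum (NPre Tau (oplusL (map (fun pe =>
                     (fst pe, PDirac (NSum (NBV 0%nat) (snd pe)))) l))) F))
        (NRec (NSum (NSum (NPre Tau (PDirac (NBV 0%nat))) (sumL (map snd l))) F))
with eqP : pexp -> pexp -> Prop :=
| eqP_refl P : eqP P P
| eqP_sym P Q : eqP P Q -> eqP Q P
| eqP_trans P Q R' : eqP P Q -> eqP Q R' -> eqP P R'
| eqP_dirac E F : eqN E F -> eqP (PDirac E) (PDirac F)
| eqP_oplus p P P' Q Q' : eqP P P' -> eqP Q Q' -> eqP (POplus p P Q) (POplus p P' Q')
| ax_P1 p P Q : 0 < p < 1 -> eqP (POplus p P Q) (POplus (1 - p) Q P)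
| ax_P2 p q P Q R' : 0 < p -> 0 < q -> p + q < 1 ->
    eqP (POplus p P (POplus (q / (1 - p)) Q R'))
        (POplus (p + q) (POplus (p / (p + q)) P Q) R')
| ax_P3 p P : 0 < p < 1 -> eqP (POplus p P P) P.

Inductive pmap : pexp -> (nexp -> R) -> Prop :=
| pm_dirac E (mu : nexp -> R) : mu E = 1 -> (forall F, F <> E -> mu F = 0) ->
    pmap (PDirac E) mu
| pm_oplus p P Q mu nu : pmap P mu -> pmap Q nu ->
    pmap (POplus p P Q) (fun F => p * mu F + (1 - p) * nu F).

Inductive step : nexp -> act -> (nexp -> R) -> Prop :=
| st_pre a P mu : pmap P mu -> step (NPre a P) a mu
| st_rec E a mu : step (open E (NRec E)) a mu -> step (NRec E) a mu
| st_suml E F a mu : step E a mu -> step (NSum E F) a mu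
| st_sumr E F a mu : step F a mu -> step (NSum E F) a mu.

Record eqsys : Type := EqSys { formals : list nat; rhs : list nexp }.

Definition sys_wf (sy : eqsys) : Prop :=
  NoDup (formals sy) /\ length (formals sy) = length (rhs sy) /\
  formals sy <> [] /\ Forall expr (rhs sy).

Definition sysVar (sy : eqsys) (v : nat) : Prop :=
  In v (flat_map fvN (rhs sy)) /\ ~ In v (formals sy).

Fixpoint stdP (Xs : list nat) (P : pexp) : Prop :=
  match P with
  | PDirac (NFV x) => In x Xs
  | PDirac _ => False
  | POplus _ P Q => stdP Xs P /\ stdP Xs Q
  end.

Fixpoint leavesP (P : pexp) : list nat :=
  match P with
  | PDirac (NFV x) => [x]
  | PDirac _ => []
  | POplus _ P Q => leavesP P ++ leavesP Q
  end.

Fixpoint stdTerms (Xs : list nat) (E : nexp) : Prop :=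
  match E with
  | NPre _ P => stdP Xs P /\ NoDup (leavesP P)
  | NFV v => ~ In v Xs
  | NSum E F => stdTerms Xs E /\ stdTerms Xs F
  | _ => False
  end.

Definition stdRhs (Xs : list nat) (E : nexp) : Prop := E = NNil \/ stdTerms Xs E.

Definition standard (sy : eqsys) : Prop := Forall (stdRhs (formals sy)) (rhs sy).

Fixpoint lookup (Xs : list nat) (Es : list nexp) (x : nat) : nexp :=
  match Xs, Es with
  | y :: Xs', F :: Es' => if Nat.eqb x y then F else lookup Xs' Es' x
  | _, _ => NFV x
  end.

Definition satisfies (E : nexp) (sy : eqsys) : Prop :=
  exists Es : list nexp,
    length Es = length (formals sy) /\ Forall expr Es /\ nth 0%nat Es NNil = E /\
    forall i, (i < length (formals sy))%nat ->
      eqN (nth i Es NNil) (fsubstN (lookup (formals sy) Es) (nth i (rhs sy) NNil)).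

(* subdistributions over the formal variables (names) *)
Definition dist := nat -> R.
Definition diracN (x : nat) : dist := fun y => if Nat.eqb y x then 1 else 0.
Definition zeroD : dist := fun _ => 0.
Definition liftD (nu : dist) : nexp -> R :=
  fun F => match F with NFV y => nu y | _ => 0 end.

Definition sys_trans (sy : eqsys) (x : nat) (a : act) (nu : dist) : Prop :=
  exists i, (i < length (formals sy))%nat /\ nth i (formals sy) 0%nat = x /\
    (forall y, nu y <> 0 -> In y (formals sy)) /\
    exists mu, step (nth i (rhs sy) NNil) a mu /\ forall F, mu F = liftD nu F.

Inductive ctrans (sy : eqsys) (a : act) : dist -> dist -> Prop :=
| ct_base x nu : sys_trans sy x a nu -> ctrans sy a (diracN x) nu
| ct_zero : ctrans sy a zeroD zeroD
| ct_comb c1 c2 m1 n1 m2 n2 : 0 <= c1 -> 0 <= c2 -> c1 + c2 <= 1 ->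
    ctrans sy a m1 n1 -> ctrans sy a m2 n2 ->
    ctrans sy a (fun x => c1 * m1 x + c2 * m2 x) (fun x => c1 * n1 x + c2 * n2 x).

(* weak transition mu ==> nu via a derivation (mu_i^->, mu_i^x)_i *)
Definition weak (sy : eqsys) (mu nu : dist) : Prop :=
  exists mto mx : nat -> dist,
    (forall i x, 0 <= mto i x /\ 0 <= mx i x) /\
    (forall i, ctrans sy Tau (mto i) (fun x => mto (S i) x + mx (S i) x)) /\
    (forall x, mu x = mto 0%nat x + mx 0%nat x) /\
    (forall x, infinite_sum (fun i => mx i x) (nu x)).

Definition weak_tr (sy : eqsys) (a : act) (mu nu : dist) : Prop :=
  exists m1 m2, weak sy mu m1 /\ ctrans sy a m1 m2 /\ weak sy m2 nu.

Definition sys_guarded (sy : eqsys) : Prop :=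
  forall x, In x (formals sy) -> ~ weak_tr sy Tau (diracN x) (diracN x).

End ProbCCS.

(* Main.v *)
Require Import Defs.
From Stdlib Require Import Reals List Lia Lra Psatz Arith Classical.
Import ListNotations.
Set Implicit Arguments.
Local Open Scope nat_scope.


Scheme nexp_mind := Induction for nexp Sort Prop
  with pexp_mind := Induction for pexp Sort Prop.
Combined Scheme nexp_pexp_mind from nexp_mind, pexp_mind.

Scheme UGN_mind := Induction for UGN Sort Prop
  with UGP_mind := Induction for UGP Sort Prop.

Arguments NNil {L}.
Arguments NFV {L} _.
Arguments NBV {L} _.
Arguments Tau {L}.
Arguments ug_fv {L} _.
Arguments ug_bv {L} _.

Section SecA.
Context {L : Type}.
Notation nexp := (nexp L).
Notation pexp := (pexp L).

Fixpoint sizeN (E : nexp) : nat :=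
  match E with
  | NNil => 1 | NFV _ => 1 | NBV _ => 1
  | NPre _ P => S (sizeP P)
  | NRec F => S (sizeN F)
  | NSum F G => S (sizeN F + sizeN G)
  end
with sizeP (P : pexp) : nat :=
  match P with
  | PDirac F => S (sizeN F)
  | POplus _ P Q => S (sizeP P + sizeP Q)
  end.

Lemma size_open_both x :
  (forall (E : nexp) k, sizeN (openN k (NFV x) E) = sizeN E) /\
  (forall (P : pexp) k, sizeP (openP k (NFV x) P) = sizeP P).
Proof.
  apply nexp_pexp_mind; simpl; intros; auto.
  - destruct (Nat.eqb n k); reflexivity.
Qed.

Lemma lc_mono_both :
  (forall (E : nexp) k, lcN k E -> forall k', k <= k' -> lcN k' E) /\
  (forall (P : pexp) k, lcP k P -> forall k', k <= k' -> lcP k' P).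
Proof.
  apply nexp_pexp_mind; simpl; intros; try tauto.
  - lia.
  - eapply H; eauto.
  - eapply H; eauto. lia.
  - destruct H1; split; eauto.
  - eapply H; eauto.
  - destruct H1; split; eauto.
Qed.

Lemma open_lc_both u :
  (forall (E : nexp) k, lcN k E -> openN k u E = E) /\
  (forall (P : pexp) k, lcP k P -> openP k u P = P).
Proof.
  apply nexp_pexp_mind; simpl; intros; auto.
  - destruct (Nat.eqb_spec n k); [lia|auto].
  - rewrite H; auto.
  - rewrite H; auto.
  - destruct H1; rewrite H, H0; auto.
  - rewrite H; auto.
  - destruct H1; rewrite H, H0; auto.
Qed.

Lemma lc_open_both u : lcN 0 u ->
  (forall (E : nexp) k, lcN (S k) E -> lcN k (openN k u E)) /\
  (forall (P : pexp) k, lcP (S k) P -> lcP k (openP k u P)).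
Proof.
  intro Hu.
  apply nexp_pexp_mind; simpl; intros; auto.
  - destruct (Nat.eqb_spec n k).
    + eapply (proj1 lc_mono_both); eauto; lia.
    + simpl; lia.
  - destruct H1; split; auto.
  - destruct H1; split; auto.
Qed.

Lemma probs_open_both u : probsN u ->
  (forall (E : nexp) k, probsN E -> probsN (openN k u E)) /\
  (forall (P : pexp) k, probsP P -> probsP (openP k u P)).
Proof.
  intro Hu.
  apply nexp_pexp_mind; simpl; intros; auto.
  - destruct (Nat.eqb n k); simpl; auto.
  - destruct H1; split; auto.
  - destruct H1 as [? [? ?]]; split; auto.
Qed.

Lemma fv_open_both u :
  (forall (E : nexp) k v, In v (fvN (openN k u E)) -> In v (fvN E) \/ In v (fvN u)) /\
  (forall (P : pexp) k v, In v (fvP (openP k u P)) -> In v (fvP P) \/ In v (fvN u)).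
Proof.
  apply nexp_pexp_mind; simpl; intros; auto.
  - destruct (Nat.eqb n k); simpl in *; auto.
  - eauto.
  - eauto.
  - apply in_app_or in H1; destruct H1 as [H1|H1];
      [destruct (H _ _ H1)|destruct (H0 _ _ H1)]; auto with datatypes.
  - eauto.
  - apply in_app_or in H1; destruct H1 as [H1|H1];
      [destruct (H _ _ H1)|destruct (H0 _ _ H1)]; auto with datatypes.
Qed.

Lemma fsubst_ext_both :
  (forall (E : nexp) s s', (forall v, In v (fvN E) -> s v = s' v) -> fsubstN s E = fsubstN s' E) /\
  (forall (P : pexp) s s', (forall v, In v (fvP P) -> s v = s' v) -> fsubstP s P = fsubstP s' P).
Proof.
  apply nexp_pexp_mind; simpl; intros; auto.
  - f_equal; auto.
  - f_equal; auto.
  - f_equal; auto with datatypes.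
  - f_equal; auto.
  - f_equal; auto with datatypes.
Qed.

Lemma fsubst_comp_both :
  (forall (E : nexp) s t, fsubstN t (fsubstN s E) = fsubstN (fun v => fsubstN t (s v)) E) /\
  (forall (P : pexp) s t, fsubstP t (fsubstP s P) = fsubstP (fun v => fsubstN t (s v)) P).
Proof.
  apply nexp_pexp_mind; simpl; intros; auto; f_equal; auto.
Qed.

Lemma fsubst_id_both :
  (forall E : nexp, fsubstN NFV E = E) /\ (forall P, fsubstP (@NFV L) P = P).
Proof.
  apply nexp_pexp_mind; simpl; intros; auto; f_equal; auto.
Qed.

Definition lcS (s : nat -> nexp) := forall v, lcN 0 (s v).

Lemma lc_fsubst_both s : lcS s ->
  (forall (E : nexp) k, lcN k E -> lcN k (fsubstN s E)) /\
  (forall (P : pexp) k, lcP k P -> lcP k (fsubstP s P)).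
Proof.
  intro Hs.
  apply nexp_pexp_mind; simpl; intros; auto; try tauto.
  - eapply (proj1 lc_mono_both); eauto; lia.
  - destruct H1; split; auto.
  - destruct H1; split; auto.
Qed.

Lemma probs_fsubst_both s : (forall v, probsN (s v)) ->
  (forall E : nexp, probsN E -> probsN (fsubstN s E)) /\
  (forall P : pexp, probsP P -> probsP (fsubstP s P)).
Proof.
  intro Hs.
  apply nexp_pexp_mind; simpl; intros; auto; tauto.
Qed.

Lemma fv_fsubst_both s :
  (forall (E : nexp) v, In v (fvN (fsubstN s E)) -> exists u, In u (fvN E) /\ In v (fvN (s u))) /\
  (forall (P : pexp) v, In v (fvP (fsubstP s P)) -> exists u, In u (fvP P) /\ In v (fvN (s u))).
Proof.
  apply nexp_pexp_mind; simpl; intros; auto; try tauto.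
  - exists n; auto.
  - apply in_app_or in H1; destruct H1 as [H1|H1];
      [destruct (H _ H1) as [u [? ?]]|destruct (H0 _ H1) as [u [? ?]]];
      exists u; auto with datatypes.
  - apply in_app_or in H1; destruct H1 as [H1|H1];
      [destruct (H _ H1) as [u [? ?]]|destruct (H0 _ H1) as [u [? ?]]];
      exists u; auto with datatypes.
Qed.

Lemma fsubst_open_both s : lcS s ->
  (forall (E : nexp) k u, fsubstN s (openN k u E) = openN k (fsubstN s u) (fsubstN s E)) /\
  (forall (P : pexp) k u, fsubstP s (openP k u P) = openP k (fsubstN s u) (fsubstP s P)).
Proof.
  intro Hs.
  apply nexp_pexp_mind; simpl; intros; auto; try (f_equal; auto; fail).
  - rewrite (proj1 (open_lc_both _)); auto.
    eapply (proj1 lc_mono_both); eauto; lia.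
  - destruct (Nat.eqb n k); simpl; auto.
Qed.

End SecA.

Ltac dif := repeat match goal with H : context [if ?c then _ else _] |- _ => destruct c end.

Section SecB.
Context {L : Type}.
Notation nexp := (nexp L).
Notation pexp := (pexp L).

Definition ren (k x : nat) (v : var) : var :=
  match v with inl n => if Nat.eqb n k then inr x else inl n | inr y => inr y end.

Lemma unshift_cons a V : unshift (a :: V) =
  (match a with inl O => [] | inl (S n) => [inl n] | inr x => [inr x] end) ++ unshift V.
Proof. reflexivity. Qed.

Lemma unshift_app V W : unshift (V ++ W) = unshift V ++ unshift W.
Proof. unfold unshift. apply flat_map_app. Qed.

Lemma unshift_map_ren k x V :
  unshift (map (ren (S k) x) V) = map (ren k x) (unshift V).
Proof.
  induction V as [|a V IH]; [reflexivity|].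
  simpl map. rewrite !unshift_cons, map_app, IH. f_equal.
  destruct a as [[|n]|y]; simpl; auto.
  destruct (Nat.eqb n k); reflexivity.
Qed.

Lemma in_unshift v V : In v (unshift V) ->
  (exists n, v = inl n /\ In (inl (S n)) V) \/ (exists y, v = inr y /\ In (inr y) V).
Proof.
  induction V as [|a V IH]; [simpl; tauto|].
  rewrite unshift_cons. intro H. apply in_app_or in H. destruct H as [H|H].
  - destruct a as [[|n]|y]; simpl in H; [tauto| |].
    + destruct H as [H|[]]; subst; left; exists n; simpl; auto.
    + destruct H as [H|[]]; subst; right; exists y; simpl; auto.
  - destruct (IH H) as [[n [? ?]]|[y [? ?]]]; [left; exists n|right; exists y]; simpl; auto.
Qed.

Lemma unshift_nil V : unshift V = [] -> forall v, In v V -> v = inl 0.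
Proof.
  induction V as [|a V IH]; [simpl; tauto|].
  rewrite unshift_cons. intros H v [Hv|Hv].
  - subst. destruct v as [[|n]|y]; simpl in H; try discriminate; auto.
  - apply IH; auto. apply app_eq_nil in H; tauto.
Qed.

Lemma ug_open_back x :
  (forall (E : nexp) W, UGN E W -> forall B k, E = openN k (NFV x) B -> ~ In x (fvN B) ->
     exists W', UGN B W' /\ W = map (ren k x) W') /\
  (forall (P : pexp) W, UGP P W -> forall B k, P = openP k (NFV x) B -> ~ In x (fvP B) ->
     exists W', UGP B W' /\ W = map (ren k x) W').
Proof.
  split.
  - apply (UGN_mind (fun E W _ => forall B k, E = openN k (NFV x) B -> ~ In x (fvN B) ->
     exists W', UGN B W' /\ W = map (ren k x) W')
     (fun P W _ => forall B k, P = openP k (NFV x) B -> ~ In x (fvP B) ->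
     exists W', UGP B W' /\ W = map (ren k x) W')); intros.
    + destruct B; simpl in H; try discriminate.
      * injection H; intros; subst. eexists; split; [constructor|reflexivity].
      * destruct (Nat.eqb_spec n k); [|discriminate]. injection H; intros; subst.
        exists [inl k]; split; [constructor|]. simpl. rewrite Nat.eqb_refl. reflexivity.
    + destruct B; simpl in H; try discriminate.
      destruct (Nat.eqb_spec n0 k); [discriminate|]. injection H; intros; subst.
      eexists; split; [constructor|]. simpl.
      match goal with |- context [Nat.eqb ?a k] => destruct (Nat.eqb_spec a k) end;
        [contradiction|reflexivity].
    + destruct B; simpl in H0; try discriminate.
      dif; discriminate.
      injection H0; intros; subst.
      destruct (H p k eq_refl H1) as [W' [? ?]]. exists W'; split; auto. constructor; auto.
    + destruct B; simpl in H0; try discriminate.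
      dif; discriminate.
      injection H0; intros; subst.
      destruct (H B (S k) eq_refl H1) as [W' [? ?]]. subst V.
      exists (unshift W'); split.
      * constructor; auto. intro Hs. apply n. intro v. split; intro Hv.
        -- apply in_map_iff in Hv. destruct Hv as [w [Hw1 Hw2]]. apply Hs in Hw2.
           destruct Hw2 as [Hw2|[]]; subst; simpl; auto.
        -- destruct Hv as [Hv|[]]; subst. apply in_map_iff. exists (inl 0).
           split; [reflexivity|]. apply Hs; simpl; auto.
      * apply unshift_map_ren.
    + destruct B; simpl in H0; try discriminate.
      dif; discriminate.
      injection H0; intros; subst. simpl in H1.
      destruct (H B1 k eq_refl) as [W' [? ?]]; [intro; apply H1; apply in_or_app; auto|].
      exists W'; split; auto. constructor; auto.
    + destruct B; simpl in H0; try discriminate.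
      dif; discriminate.
      injection H0; intros; subst. simpl in H1.
      destruct (H B2 k eq_refl) as [W' [? ?]]; [intro; apply H1; apply in_or_app; auto|].
      exists W'; split; auto. apply ug_sumr; auto.
    + destruct B; simpl in H0; try discriminate.
      injection H0; intros; subst.
      destruct (H n k eq_refl H1) as [W' [? ?]]. exists W'; split; auto. constructor; auto.
    + destruct B; simpl in H1; try discriminate.
      injection H1; intros; subst. simpl in H2.
      destruct (H B1 k eq_refl) as [W1 [? ?]]; [intro; apply H2; apply in_or_app; auto|].
      destruct (H0 B2 k eq_refl) as [W2 [? ?]]; [intro; apply H2; apply in_or_app; auto|].
      subst. exists (W1 ++ W2); split; [constructor; auto|]. rewrite map_app; auto.
  - apply (UGP_mind (fun E W _ => forall B k, E = openN k (NFV x) B -> ~ In x (fvN B) ->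
     exists W', UGN B W' /\ W = map (ren k x) W')
     (fun P W _ => forall B k, P = openP k (NFV x) B -> ~ In x (fvP B) ->
     exists W', UGP B W' /\ W = map (ren k x) W')); intros.
    + destruct B; simpl in H; try discriminate.
      * injection H; intros; subst. eexists; split; [constructor|reflexivity].
      * destruct (Nat.eqb_spec n k); [|discriminate]. injection H; intros; subst.
        exists [inl k]; split; [constructor|]. simpl. rewrite Nat.eqb_refl. reflexivity.
    + destruct B; simpl in H; try discriminate.
      destruct (Nat.eqb_spec n0 k); [discriminate|]. injection H; intros; subst.
      eexists; split; [constructor|]. simpl.
      match goal with |- context [Nat.eqb ?a k] => destruct (Nat.eqb_spec a k) end;
        [contradiction|reflexivity].
    + destruct B; simpl in H0; try discriminate.
      dif; discriminate.
      injection H0; intros; subst.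
      destruct (H p k eq_refl H1) as [W' [? ?]]. exists W'; split; auto. constructor; auto.
    + destruct B; simpl in H0; try discriminate.
      dif; discriminate.
      injection H0; intros; subst.
      destruct (H B (S k) eq_refl H1) as [W' [? ?]]. subst V.
      exists (unshift W'); split.
      * constructor; auto. intro Hs. apply n. intro v. split; intro Hv.
        -- apply in_map_iff in Hv. destruct Hv as [w [Hw1 Hw2]]. apply Hs in Hw2.
           destruct Hw2 as [Hw2|[]]; subst; simpl; auto.
        -- destruct Hv as [Hv|[]]; subst. apply in_map_iff. exists (inl 0).
           split; [reflexivity|]. apply Hs; simpl; auto.
      * apply unshift_map_ren.
    + destruct B; simpl in H0; try discriminate.
      dif; discriminate.
      injection H0; intros; subst. simpl in H1.
      destruct (H B1 k eq_refl) as [W' [? ?]]; [intro; apply H1; apply in_or_app; auto|].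
      exists W'; split; auto. constructor; auto.
    + destruct B; simpl in H0; try discriminate.
      dif; discriminate.
      injection H0; intros; subst. simpl in H1.
      destruct (H B2 k eq_refl) as [W' [? ?]]; [intro; apply H1; apply in_or_app; auto|].
      exists W'; split; auto. apply ug_sumr; auto.
    + destruct B; simpl in H0; try discriminate.
      injection H0; intros; subst.
      destruct (H n k eq_refl H1) as [W' [? ?]]. exists W'; split; auto. constructor; auto.
    + destruct B; simpl in H1; try discriminate.
      injection H1; intros; subst. simpl in H2.
      destruct (H B1 k eq_refl) as [W1 [? ?]]; [intro; apply H2; apply in_or_app; auto|].
      destruct (H0 B2 k eq_refl) as [W2 [? ?]]; [intro; apply H2; apply in_or_app; auto|].
      subst. exists (W1 ++ W2); split; [constructor; auto|]. rewrite map_app; auto.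
Qed.

Lemma ug_fv_both :
  (forall (E : nexp) W, UGN E W -> forall y, In (inr y) W -> In y (fvN E)) /\
  (forall (P : pexp) W, UGP P W -> forall y, In (inr y) W -> In y (fvP P)).
Proof.
  split.
  - apply (UGN_mind (fun E W _ => forall y, In (inr y) W -> In y (fvN E))
                    (fun P W _ => forall y, In (inr y) W -> In y (fvP P))); simpl; intros;
      try (apply in_or_app); auto.
    + destruct H as [H|[]]; injection H; auto.
    + destruct H as [H|[]]; discriminate.
    + apply in_unshift in H0. destruct H0 as [[m [? ?]]|[z [? ?]]]; [discriminate|].
      injection H0; intros; subst; auto.
    + apply in_app_or in H1; destruct H1; auto.
  - apply (UGP_mind (fun E W _ => forall y, In (inr y) W -> In y (fvN E))
                    (fun P W _ => forall y, In (inr y) W -> In y (fvP P))); simpl; intros;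
      try (apply in_or_app); auto.
    + destruct H as [H|[]]; injection H; auto.
    + destruct H as [H|[]]; discriminate.
    + apply in_unshift in H0. destruct H0 as [[m [? ?]]|[z [? ?]]]; [discriminate|].
      injection H0; intros; subst; auto.
    + apply in_app_or in H1; destruct H1; auto.
Qed.

Lemma ug_nonempty_both :
  (forall (E : nexp) W, UGN E W -> W <> []) /\
  (forall (P : pexp) W, UGP P W -> W <> []).
Proof.
  split.
  - apply (UGN_mind (fun E W _ => W <> []) (fun P W _ => W <> [])); intros;
      try discriminate; auto.
    + intro Hn. apply n. intro v. split; intro Hv.
      * rewrite (unshift_nil _ Hn _ Hv); simpl; auto.
      * destruct Hv as [Hv|[]]; subst. destruct V as [|a V]; [contradiction|].
        rewrite (unshift_nil _ Hn a); simpl; auto.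
    + intro Hn. apply app_eq_nil in Hn. tauto.
  - apply (UGP_mind (fun E W _ => W <> []) (fun P W _ => W <> [])); intros;
      try discriminate; auto.
    + intro Hn. apply n. intro v. split; intro Hv.
      * rewrite (unshift_nil _ Hn _ Hv); simpl; auto.
      * destruct Hv as [Hv|[]]; subst. destruct V as [|a V]; [contradiction|].
        rewrite (unshift_nil _ Hn a); simpl; auto.
    + intro Hn. apply app_eq_nil in Hn. tauto.
Qed.

Lemma ungd_open (C : nexp) k x : ~ In x (fvN C) ->
  ~ unguarded_in C (inl 0) -> ~ unguarded_in (openN (S k) (NFV x) C) (inl 0).
Proof.
  intros Hx Hu [W [HW Hs]]. apply Hu.
  destruct (proj1 (ug_open_back x) _ _ HW C (S k) eq_refl Hx) as [W' [HW' ->]].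
  exists W'; split; auto. intro v; split; intro Hv.
  - assert (In (ren (S k) x v) (map (ren (S k) x) W')) by (apply in_map; auto).
    apply Hs in H. destruct H as [H|[]].
    destruct v as [n|y]; simpl in H; [|discriminate].
    destruct (Nat.eqb n (S k)); [discriminate|]. injection H; intros; subst; simpl; auto.
  - destruct Hv as [Hv|[]]; subst.
    assert (In (@inl nat nat 0) (map (ren (S k) x) W')) by (apply Hs; simpl; auto).
    apply in_map_iff in H. destruct H as [w [Hw1 Hw2]].
    destruct w as [n|y]; simpl in Hw1; [|discriminate].
    destruct (Nat.eqb n (S k)); [discriminate|]. injection Hw1; intros; subst; auto.
Qed.

Lemma guarded_open_both x :
  (forall (E : nexp) k, guardedN E -> ~ In x (fvN E) -> guardedN (openN k (NFV x) E)) /\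
  (forall (P : pexp) k, guardedP P -> ~ In x (fvP P) -> guardedP (openP k (NFV x) P)).
Proof.
  apply nexp_pexp_mind; simpl; intros; auto.
  - destruct (Nat.eqb n k); simpl; auto.
  - destruct H0; split; auto. apply ungd_open; auto.
  - destruct H1; split; [apply H|apply H0]; auto; intro; apply H2; apply in_or_app; auto.
  - destruct H1; split; [apply H|apply H0]; auto; intro; apply H2; apply in_or_app; auto.
Qed.

Lemma rec_ug (B : nexp) x V W : ~ unguarded_in B (inl 0) -> ~ In x (fvN B) ->
  UGN (open B (NFV x)) W -> (forall w, In w W -> exists v, In v (x :: V) /\ w = inr v) ->
  exists W'', UGN (NRec B) W'' /\ forall w, In w W'' -> exists v, In v V /\ w = inr v.
Proof.
  intros Hg Hx HW HWs.
  destruct (proj1 (ug_open_back x) _ _ HW B 0 eq_refl Hx) as [W' [HW' ->]].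
  assert (Hs : ~ seteq W' [inl 0]).
  { intro Hs. apply Hg. exists W'; auto. }
  exists (unshift W'); split; [constructor; auto|].
  intros w Hw. apply in_unshift in Hw. destruct Hw as [[n [-> Hn]]|[y [-> Hy]]].
  - destruct (HWs (ren 0 x (inl (S n)))) as [v [_ Hv]]; [apply in_map; auto|]. discriminate.
  - destruct (HWs (ren 0 x (inr y))) as [v [Hv1 Hv2]]; [apply in_map; auto|].
    simpl in Hv2. injection Hv2; intros; subst.
    destruct Hv1 as [Hv1|Hv1]; [|eauto].
    subst. exfalso. apply Hx. eapply (proj1 ug_fv_both); eauto.
Qed.

End SecB.

Section SecC.
Context {L : Type}.
Notation nexp := (nexp L).
Notation pexp := (pexp L).

Fixpoint summ (t s : nexp) : Prop :=
  match t with
  | NNil => False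
  | NSum a b => summ a s \/ summ b s
  | _ => s = t
  end.

Definition mkSum (a b : nexp) : nexp :=
  match a with
  | NNil => b
  | _ => match b with NNil => a | _ => NSum a b end
  end.

Fixpoint nz (t : nexp) : nexp :=
  match t with
  | NSum a b => mkSum (nz a) (nz b)
  | _ => t
  end.

Fixpoint okT (Xs : list nat) (t : nexp) : Prop :=
  match t with
  | NNil => True
  | NSum a b => okT Xs a /\ okT Xs b
  | NPre _ P => stdP Xs P /\ NoDup (leavesP P)
  | NFV v => ~ In v Xs
  | _ => False
  end.

Lemma stdTerms_okT Xs (t : nexp) : stdTerms Xs t -> okT Xs t.
Proof. induction t; simpl; tauto. Qed.

Lemma std_okT Xs (t : nexp) : stdRhs Xs t -> okT Xs t.
Proof. intros [->|H]; simpl; auto. apply stdTerms_okT; auto. Qed.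

Lemma mkSum_std Xs (a b : nexp) : stdRhs Xs a -> stdRhs Xs b -> stdRhs Xs (mkSum a b).
Proof.
  intros [->|Ha] Hb; simpl; auto.
  destruct Hb as [->|Hb].
  - destruct a; simpl in *; try tauto; right; auto.
  - destruct a; simpl in *; try tauto; destruct b; simpl in *; try tauto;
      right; simpl; tauto.
Qed.

Lemma okT_nz Xs (t : nexp) : okT Xs t -> stdRhs Xs (nz t).
Proof.
  induction t; simpl; intros; try tauto.
  - left; auto.
  - right; simpl; auto.
  - right; simpl; auto.
  - apply mkSum_std; tauto.
Qed.

Lemma summ_mkSum (a b s : nexp) : summ (mkSum a b) s <-> summ a s \/ summ b s.
Proof.
  destruct a; simpl; try tauto; destruct b; simpl; tauto.
Qed.

Lemma summ_nz (t s : nexp) : summ (nz t) s <-> summ t s.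
Proof.
  induction t; simpl; try tauto.
  rewrite summ_mkSum. tauto.
Qed.

Lemma eqN_mkSum s (a b : nexp) :
  eqN (NSum (fsubstN s a) (fsubstN s b)) (fsubstN s (mkSum a b)).
Proof.
  destruct a; simpl;
  try (eapply eqN_trans; [apply ax_N1|apply ax_N4]);
  destruct b; simpl; try apply eqN_refl; apply ax_N4.
Qed.

Lemma eqN_nz s (t : nexp) : eqN (fsubstN s t) (fsubstN s (nz t)).
Proof.
  induction t; simpl; try apply eqN_refl.
  eapply eqN_trans; [apply eqN_sum; eauto|]. apply eqN_mkSum.
Qed.

Lemma lc_mkSum k (a b : nexp) : lcN k a -> lcN k b -> lcN k (mkSum a b).
Proof. destruct a; simpl; auto; destruct b; simpl; auto. Qed.
Lemma probs_mkSum (a b : nexp) : probsN a -> probsN b -> probsN (mkSum a b).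
Proof. destruct a; simpl; auto; destruct b; simpl; auto. Qed.
Lemma fv_mkSum (a b : nexp) v : In v (fvN (mkSum a b)) -> In v (fvN a) \/ In v (fvN b).
Proof.
  destruct a, b; cbn [mkSum]; intro H; try (right; exact H); try (left; exact H);
    apply in_app_or; exact H.
Qed.

Lemma lc_nz k (t : nexp) : lcN k t -> lcN k (nz t).
Proof. induction t; simpl; auto. intros [? ?]. apply lc_mkSum; auto. Qed.
Lemma probs_nz (t : nexp) : probsN t -> probsN (nz t).
Proof. induction t; simpl; auto. intros [? ?]. apply probs_mkSum; auto. Qed.
Lemma fv_nz (t : nexp) v : In v (fvN (nz t)) -> In v (fvN t).
Proof.
  induction t; simpl; auto. intro H. apply fv_mkSum in H.
  apply in_or_app. tauto.
Qed.

Lemma stdP_leaves Xs (P : pexp) y : stdP Xs P -> In y (leavesP P) -> In y Xs.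
Proof.
  induction P; simpl.
  - destruct n; simpl; try tauto. intros ? [->|[]]; auto.
  - intros [Ha Hb] H. apply in_app_or in H. destruct H; auto.
Qed.

Lemma stdP_leaves_ne Xs (P : pexp) : stdP Xs P -> leavesP P <> [].
Proof.
  induction P; simpl.
  - destruct n; simpl; try tauto; discriminate.
  - intros [Ha Hb] H. apply app_eq_nil in H. destruct H as [H H']. exact (IHP1 Ha H).
Qed.

Lemma stdP_fv Xs (P : pexp) y : stdP Xs P -> In y (fvP P) -> In y Xs.
Proof.
  induction P; simpl.
  - destruct n; simpl; try tauto. intros ? [->|[]]; auto.
  - intros [Ha Hb] H. apply in_app_or in H. destruct H; auto.
Qed.

Lemma stdP_mono Xs Ys (P : pexp) : stdP Xs P -> incl Xs Ys -> stdP Ys P.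
Proof.
  induction P; simpl.
  - destruct n; simpl; auto.
  - intros [? ?] ?; split; auto.
Qed.

Lemma stdP_fsubst Xs (P : pexp) s : stdP Xs P -> (forall y, In y Xs -> s y = NFV y) ->
  fsubstP s P = P.
Proof.
  induction P; simpl.
  - destruct n; simpl; try tauto. intros. rewrite H0; auto.
  - intros [? ?] ?. rewrite IHP1, IHP2; auto.
Qed.

Lemma okT_summ_pre Xs (S0 : nexp) a P : okT Xs S0 -> summ S0 (NPre a P) ->
  stdP Xs P /\ NoDup (leavesP P).
Proof.
  induction S0; simpl; intros H1 H2; try tauto; try discriminate;
    try (injection H2; intros; subst; tauto); destruct H1; destruct H2; auto.
Qed.

Lemma okT_summ_fv Xs (S0 : nexp) v : okT Xs S0 -> summ S0 (NFV v) -> ~ In v Xs.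
Proof.
  induction S0; simpl; intros H1 H2; try tauto; try discriminate;
    try (injection H2; intros; subst; tauto); destruct H1; destruct H2; auto.
Qed.

Lemma summ_probs (S0 s : nexp) : probsN S0 -> summ S0 s -> probsN s.
Proof.
  induction S0; simpl; intros H1 H2; subst; simpl; auto; try tauto.
Qed.

Lemma okT_fv Xs (S0 : nexp) v : okT Xs S0 -> In v (fvN S0) -> In v Xs \/ summ S0 (NFV v).
Proof.
  induction S0; simpl; try tauto.
  - intros ? [->|[]]; auto.
  - intros [? ?] ?. left. eapply stdP_fv; eauto.
  - intros [Ha Hb] H. apply in_app_or in H. destruct H as [H|H].
    + destruct (IHS0_1 Ha H); auto.
    + destruct (IHS0_2 Hb H); auto.
Qed.

Lemma stdTerms_transfer Xs Ys (S0 : nexp) : stdTerms Xs S0 -> incl Xs Ys ->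
  (forall v, summ S0 (NFV v) -> ~ In v Ys) -> stdTerms Ys S0.
Proof.
  induction S0; simpl; intros H H0 H1; try tauto.
  - apply H1; auto.
  - destruct H; split; auto; eapply stdP_mono; eauto.
  - destruct H; split; [apply IHS0_1|apply IHS0_2]; auto; intros v Hv; apply H1; auto.
Qed.

Lemma std_transfer Xs Ys (S0 : nexp) : stdRhs Xs S0 -> incl Xs Ys ->
  (forall v, summ S0 (NFV v) -> ~ In v Ys) -> stdRhs Ys S0.
Proof.
  intros [->|H] ? ?; [left; auto|right]. eapply stdTerms_transfer; eauto.
Qed.

Definition subx (x : nat) (S1 : nexp) : nat -> nexp :=
  fun v => if Nat.eqb v x then S1 else NFV v.

Lemma summ_subx Xs x S1 (S0 s : nexp) : okT Xs S0 -> ~ In x Xs ->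
  summ (fsubstN (subx x S1) S0) s ->
  (summ S0 s /\ s <> NFV x) \/ (summ S0 (NFV x) /\ summ S1 s).
Proof.
  induction S0; simpl; try tauto.
  - unfold subx. intros Hn Hx. destruct (Nat.eqb_spec n x).
    + subst. right; auto.
    + simpl. intros ->. left; split; auto. intro H; injection H; auto.
  - intros [Hs Hn] Hx ->. left. erewrite stdP_fsubst; [split; [auto|discriminate]|exact Hs|].
    intros y Hy. unfold subx. destruct (Nat.eqb_spec y x); subst; tauto.
Qed.

Lemma okT_subx Xs x S1 (S0 : nexp) : okT Xs S0 -> okT Xs S1 -> ~ In x Xs ->
  okT Xs (fsubstN (subx x S1) S0).
Proof.
  induction S0; simpl; try tauto.
  - unfold subx. destruct (Nat.eqb_spec n x); simpl; auto.
  - intros [Hs Hn] ? Hx. erewrite stdP_fsubst; [split; auto|exact Hs|].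
    intros y Hy. unfold subx. destruct (Nat.eqb_spec y x); subst; tauto.
Qed.

Fixpoint norecN (t : nexp) : Prop :=
  match t with
  | NRec _ => False
  | NPre _ P => norecP P
  | NSum a b => norecN a /\ norecN b
  | _ => True
  end
with norecP (P : pexp) : Prop :=
  match P with
  | PDirac E => norecN E
  | POplus _ P Q => norecP P /\ norecP Q
  end.

Lemma okT_norec Xs (t : nexp) : okT Xs t -> norecN t.
Proof.
  induction t; simpl; try tauto.
  intros [H _]. revert H. induction p; simpl.
  - destruct n; simpl; tauto.
  - tauto.
Qed.

Lemma fsubst_cong_both s s' :
  (forall (t : nexp), norecN t -> (forall v, In v (fvN t) -> eqN (s v) (s' v)) ->
     eqN (fsubstN s t) (fsubstN s' t)) /\
  (forall (P : pexp), norecP P -> (forall v, In v (fvP P) -> eqN (s v) (s' v)) ->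
     eqP (fsubstP s P) (fsubstP s' P)).
Proof.
  apply nexp_pexp_mind; simpl; intros; try tauto; try apply eqN_refl;
  try (apply H0; auto; fail);
  try (apply eqN_pre; auto; fail);
  try (destruct H1; apply eqN_sum; auto with datatypes; fail);
  try (apply eqP_dirac; auto; fail);
  try (destruct H1; apply eqP_oplus; auto with datatypes; fail).
Qed.

End SecC.

Arguments okT_summ_pre {L Xs S0 a P} _ _.
Arguments okT_summ_fv {L Xs S0 v} _ _.
Arguments okT_fv {L Xs S0 v} _ _.
Arguments summ_subx {L Xs x S1 S0 s} _ _ _.
Arguments stdP_leaves {L Xs P y} _ _.
Arguments stdP_leaves_ne {L Xs P} _ _.
Arguments stdP_fv {L Xs P y} _ _.
Arguments okT_nz {L Xs t} _.
Arguments okT_subx {L Xs x S1 S0} _ _ _.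
Arguments okT_norec {L Xs t} _.
Arguments std_okT {L Xs t} _.

Section SecD.
Context {L : Type}.
Notation nexp := (nexp L).
Notation pexp := (pexp L).
Notation entry := (nat * nexp * nexp)%type.

Definition fm (b : list entry) := map (fun e => fst (fst e)) b.
Definition rh (b : list entry) := map (fun e => snd (fst e)) b.
Definition sl (b : list entry) := map (fun e : entry => snd e) b.
Definition lk (b : list entry) := lookup (fm b) (sl b).

Lemma lk_cons Y S0 E b v : lk (((Y,S0),E)::b) v = if Nat.eqb v Y then E else lk b v.
Proof. reflexivity. Qed.

Lemma lk_nil v : lk [] v = NFV v.
Proof. reflexivity. Qed.

Lemma in_fm Y b : In Y (fm b) <-> exists S0 E, In ((Y,S0),E) b.
Proof.
  unfold fm. rewrite in_map_iff. split.
  - intros [[[y s] e] [H1 H2]]. simpl in H1. subst. eauto.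
  - intros [s [e H]]. exists ((Y,s),e); auto.
Qed.

Lemma fm_app b1 b2 : fm (b1 ++ b2) = fm b1 ++ fm b2.
Proof. apply map_app. Qed.

Lemma lk_notin b v : ~ In v (fm b) -> lk b v = NFV v.
Proof.
  induction b as [|[[y s] e] b IH]; intros H; [reflexivity|].
  rewrite lk_cons. simpl in H. destruct (Nat.eqb_spec v y); [subst; tauto|].
  apply IH; tauto.
Qed.

Lemma lk_in b Y S0 E : NoDup (fm b) -> In ((Y,S0),E) b -> lk b Y = E.
Proof.
  induction b as [|[[y s] e] b IH]; intros Hn H; [destruct H|].
  rewrite lk_cons. simpl in Hn. inversion Hn; subst.
  destruct H as [H|H].
  - injection H; intros; subst. rewrite Nat.eqb_refl; auto.
  - destruct (Nat.eqb_spec Y y); [subst|auto].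
    exfalso. apply H2. apply in_fm; eauto.
Qed.

Lemma lk_app_l b1 b2 v : In v (fm b1) -> lk (b1 ++ b2) v = lk b1 v.
Proof.
  induction b1 as [|[[y s] e] b1 IH]; intros H; [destruct H|].
  simpl app. rewrite !lk_cons. destruct (Nat.eqb_spec v y); auto.
  apply IH. simpl in H. destruct H; [congruence|auto].
Qed.

Lemma lk_app_r b1 b2 v : ~ In v (fm b1) -> lk (b1 ++ b2) v = lk b2 v.
Proof.
  induction b1 as [|[[y s] e] b1 IH]; intros H; [reflexivity|].
  simpl app. rewrite !lk_cons. simpl in H. destruct (Nat.eqb_spec v y); [subst; tauto|].
  apply IH; tauto.
Qed.

Lemma entry_uniq b Y S1 E1 S2 E2 : NoDup (fm b) -> In ((Y,S1),E1) b -> In ((Y,S2),E2) b ->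
  S1 = S2 /\ E1 = E2.
Proof.
  induction b as [|[[y s] e] b IH]; intros Hn H1 H2; [destruct H1|].
  simpl in Hn. inversion Hn; subst.
  destruct H1 as [H1|H1]; destruct H2 as [H2|H2].
  - rewrite H1 in H2; injection H2; auto.
  - injection H1; intros; subst. exfalso. apply H3. apply in_fm; eauto.
  - injection H2; intros; subst. exfalso. apply H3. apply in_fm; eauto.
  - eauto.
Qed.

Lemma lk_lc b : (forall Y S0 E, In ((Y,S0),E) b -> lcN 0 E) -> lcS (lk b).
Proof.
  induction b as [|[[y s] e] b IH]; intros H v; [simpl; auto|].
  rewrite lk_cons. destruct (Nat.eqb v y).
  - eapply H; left; eauto.
  - apply IH. intros; eapply H; right; eauto.
Qed.

Lemma lk_probs b : (forall Y S0 E, In ((Y,S0),E) b -> probsN E) -> forall v, probsN (lk b v).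
Proof.
  induction b as [|[[y s] e] b IH]; intros H v; [simpl; auto|].
  rewrite lk_cons. destruct (Nat.eqb v y).
  - eapply H; left; eauto.
  - apply IH. intros; eapply H; right; eauto.
Qed.

Definition Opt (A : nat -> Prop) (V : list nat) (S0 : nexp) : Prop :=
  (exists P, summ S0 (NPre Tau P) /\ forall y, In y (leavesP P) -> A y) \/
  (exists v, In v V /\ summ S0 (NFV v)).

Definition Clos (b : list entry) (A : nat -> Prop) (V : list nat) : Prop :=
  forall Y, A Y -> exists S0 E, In ((Y,S0),E) b /\ Opt A V S0.

Definition Kc (b : list entry) : Prop := forall A, Clos b A [] -> forall Y, ~ A Y.

Definition LeavesIn (b : list entry) : Prop :=
  forall Y S0 E, In ((Y,S0),E) b -> forall P, summ S0 (NPre Tau P) ->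
    forall y, In y (leavesP P) -> In y (fm b).

Lemma Opt_mono (A A' : nat -> Prop) V S0 : (forall y, A y -> A' y) -> Opt A V S0 -> Opt A' V S0.
Proof.
  intros H [[P [H1 H2]]|H3]; [left; exists P; auto|right; auto].
Qed.

Lemma Opt_restrict A V S0 Xs : Opt A V S0 ->
  (forall P, summ S0 (NPre Tau P) -> forall y, In y (leavesP P) -> In y Xs) ->
  Opt (fun y => A y /\ In y Xs) V S0.
Proof.
  intros [[P [H1 H2]]|H3] H; [left; exists P; split; auto|right; auto].
  intros y Hy; split; eauto.
Qed.

Lemma Clos_restrict b b1 A V : Clos b A V -> incl b1 b -> NoDup (fm b) -> LeavesIn b1 ->
  Clos b1 (fun y => A y /\ In y (fm b1)) V.
Proof.
  intros HC Hi Hn HL Y [HY HY1].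
  destruct (HC Y HY) as [S0 [E [HS HO]]].
  apply in_fm in HY1. destruct HY1 as [S1 [E1 HS1]].
  destruct (entry_uniq _ _ _ _ _ _ Hn HS (Hi _ HS1)) as [-> ->].
  exists S1, E1; split; auto. apply Opt_restrict; auto.
  intros; eapply HL; eauto.
Qed.

Lemma Clos_add b A V X S0 E : Clos b A V -> In ((X,S0),E) b -> Opt A V S0 ->
  Clos b (fun y => A y \/ y = X) V.
Proof.
  intros HC Hin HO Y [HY|HY].
  - destruct (HC Y HY) as [S1 [E1 [? ?]]]. exists S1, E1; split; auto.
    eapply Opt_mono; [|eauto]. simpl; auto.
  - subst Y. exists S0, E; split; auto. eapply Opt_mono; [|eauto]. simpl; auto.
Qed.

Lemma Kc_app b1 b2 : Kc b1 -> Kc b2 -> LeavesIn b1 -> LeavesIn b2 -> NoDup (fm (b1 ++ b2)) ->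
  Kc (b1 ++ b2).
Proof.
  intros K1 K2 L1 L2 Hn A HC Y HY.
  destruct (HC Y HY) as [S0 [E [Hin _]]]. apply in_app_or in Hin. destruct Hin as [Hin|Hin].
  - apply (K1 _ (Clos_restrict HC (fun e h => in_or_app _ _ _ (or_introl h)) Hn L1) Y).
    split; auto. apply in_fm; eauto.
  - apply (K2 _ (Clos_restrict HC (fun e h => in_or_app _ _ _ (or_intror h)) Hn L2) Y).
    split; auto. apply in_fm; eauto.
Qed.

Lemma Kc_cons e b1 : Kc b1 -> LeavesIn b1 -> NoDup (fm (e :: b1)) ->
  (forall P, summ (snd (fst e)) (NPre Tau P) ->
     leavesP P <> [] /\ forall y, In y (leavesP P) -> In y (fm b1)) ->
  Kc (e :: b1).
Proof.
  intros K1 L1 Hn He A HC Y HY.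
  assert (HC1 : Clos b1 (fun y => A y /\ In y (fm b1)) []).
  { apply (Clos_restrict HC); auto. intros x Hx; right; auto. }
  destruct (HC Y HY) as [S0 [E [Hin HO]]]. destruct Hin as [Hin|Hin].
  - subst e. simpl in He. destruct HO as [[P [HP HPl]]|[v [[] _]]].
    destruct (He P HP) as [Hne Hsub].
    destruct (leavesP P) as [|y l] eqn:Hl; [tauto|].
    apply (K1 _ HC1 y). split; [apply HPl|apply Hsub]; left; auto.
  - apply (K1 _ HC1 Y). split; auto. apply in_fm; eauto.
Qed.

End SecD.

Section SecE.
Context {L : Type}.
Notation nexp := (nexp L).
Notation pexp := (pexp L).

Lemma step_std Xs (t : nexp) a mu : step t a mu -> okT Xs t ->
  exists P, summ t (NPre a P) /\ pmap P mu.
Proof.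
  induction 1; simpl; intros.
  - exists P; auto.
  - tauto.
  - destruct H0. destruct (IHstep H0) as [P [? ?]]; eauto.
  - destruct H0. destruct (IHstep H1) as [P [? ?]]; eauto.
Qed.

Arguments step_std {Xs t a mu} _ _.

Lemma pmap_nonneg (P : pexp) mu : pmap P mu -> probsP P -> forall F, (0 <= mu F)%R.
Proof.
  induction 1; simpl; intros.
  - destruct (classic (F = E)) as [->|Hn]; [rewrite H; lra|rewrite H0; auto; lra].
  - destruct H1 as [[? ?] [? ?]].
    specialize (IHpmap1 H3 F). specialize (IHpmap2 H4 F). nra.
Qed.

Lemma pmap_leaf_pos Xs (P : pexp) mu : pmap P mu -> probsP P -> stdP Xs P ->
  forall y, In y (leavesP P) -> (0 < mu (NFV y))%R.
Proof.
  induction 1; simpl; intros.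
  - destruct E; simpl in *; try tauto. destruct H3 as [<-|[]]. rewrite H; lra.
  - destruct H1 as [[Hp1 Hp2] [HP HQ]]. destruct H2 as [SP SQ].
    assert (Hm := pmap_nonneg H HP (NFV y)). assert (Hn := pmap_nonneg H0 HQ (NFV y)).
    apply in_app_or in H3. destruct H3 as [H3|H3].
    + specialize (IHpmap1 HP SP y H3). nra.
    + specialize (IHpmap2 HQ SQ y H3). nra.
Qed.

Lemma rhs_props (sy : eqsys L) i : sys_wf sy -> standard sy -> i < length (formals sy) ->
  expr (nth i (rhs sy) NNil) /\ okT (formals sy) (nth i (rhs sy) NNil).
Proof.
  intros [_ [Hl [_ He]]] Hs Hi. rewrite Hl in Hi.
  split.
  - rewrite Forall_forall in He. apply He. apply nth_In; auto.
  - unfold standard in Hs. rewrite Forall_forall in Hs. apply std_okT. apply Hs.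
    apply nth_In; auto.
Qed.

Lemma diracN_nonneg x y : (0 <= diracN x y)%R.
Proof. unfold diracN. destruct (Nat.eqb y x); lra. Qed.

Lemma ctrans_nonneg (sy : eqsys L) a m n : sys_wf sy -> standard sy -> ctrans sy a m n ->
  (forall y, 0 <= m y)%R /\ (forall y, 0 <= n y)%R.
Proof.
  intros Hw Hs. induction 1.
  - split; [apply diracN_nonneg|].
    destruct H as [i [Hi [_ [_ [mu [Hst Hmu]]]]]].
    destruct (rhs_props Hw Hs Hi) as [[_ Hp] Hok].
    destruct (step_std Hst Hok) as [P [HP Hpm]].
    intro y. change (nu y) with (@liftD L nu (NFV y)). rewrite <- Hmu.
    eapply pmap_nonneg; eauto. eapply summ_probs in HP; eauto.
  - unfold zeroD; split; intros; lra.
  - destruct IHctrans1 as [Hm1 Hn1], IHctrans2 as [Hm2 Hn2]. split; intro y.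
    + specialize (Hm1 y); specialize (Hm2 y); nra.
    + specialize (Hn1 y); specialize (Hn2 y); nra.
Qed.

Definition tauOpt (sy : eqsys L) (A : nat -> Prop) (Y : nat) : Prop :=
  exists i, i < length (formals sy) /\ nth i (formals sy) 0 = Y /\
    exists P, summ (nth i (rhs sy) NNil) (NPre Tau P) /\ forall y, In y (leavesP P) -> A y.

Lemma ctrans_supp (sy : eqsys L) m n : sys_wf sy -> standard sy -> ctrans sy Tau m n ->
  forall Y, (0 < m Y)%R -> tauOpt sy (fun y => 0 < n y)%R Y.
Proof.
  intros Hw Hs. induction 1; intros Y HY.
  - unfold diracN in HY. destruct (Nat.eqb_spec Y x); [subst|lra].
    destruct H as [i [Hi [Hx [_ [mu [Hst Hmu]]]]]].
    destruct (rhs_props Hw Hs Hi) as [[_ Hp] Hok].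
    destruct (step_std Hst Hok) as [P [HP Hpm]].
    exists i; split; auto; split; auto. exists P; split; auto.
    intros y Hy. change (nu y) with (@liftD L nu (NFV y)). rewrite <- Hmu.
    destruct (okT_summ_pre Hok HP).
    eapply pmap_leaf_pos; eauto. eapply summ_probs in HP; eauto.
  - unfold zeroD in HY; lra.
  - destruct (ctrans_nonneg Hw Hs H2) as [Hm1 Hn1].
    destruct (ctrans_nonneg Hw Hs H3) as [Hm2 Hn2].
    assert (HY1 := Hm1 Y). assert (HY2 := Hm2 Y).
    destruct (Rlt_dec 0 (c1 * m1 Y)) as [Hc|Hc].
    + assert (0 < m1 Y)%R by nra. assert (0 < c1)%R by nra.
      destruct (IHctrans1 Y H4) as [i [? [? [P [? ?]]]]].
      exists i; split; auto; split; auto; exists P; split; auto.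
      intros y Hy. specialize (H9 y Hy). specialize (Hn2 y). nra.
    + assert (0 < c2 * m2 Y)%R by nra.
      assert (0 < m2 Y)%R by nra. assert (0 < c2)%R by nra.
      destruct (IHctrans2 Y H5) as [i [? [? [P [? ?]]]]].
      exists i; split; auto; split; auto; exists P; split; auto.
      intros y Hy. specialize (H10 y Hy). specialize (Hn1 y). nra.
Qed.

Lemma sum_nonneg (f : nat -> R) n : (forall j, 0 <= f j)%R -> (0 <= sum_f_R0 f n)%R.
Proof.
  intro Hf. induction n; simpl; [apply Hf|]. specialize (Hf (S n)); lra.
Qed.

Lemma sum_ge_term (f : nat -> R) i n : (forall j, 0 <= f j)%R -> i <= n ->
  (f i <= sum_f_R0 f n)%R.
Proof.
  intros Hf. induction n; intros Hi.
  - assert (i = 0) by lia. subst. simpl. lra.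
  - destruct (Nat.eq_dec i (S n)).
    + subst. simpl. assert (0 <= sum_f_R0 f n)%R by (apply sum_nonneg; auto).
      lra.
    + simpl. specialize (Hf (S n)). assert (i <= n) by lia. specialize (IHn H). lra.
Qed.

Lemma inf_sum_ge (f : nat -> R) l : (forall j, 0 <= f j)%R -> infinite_sum f l ->
  forall i, (f i <= l)%R.
Proof.
  intros Hf Hs i. destruct (Rle_dec (f i) l) as [|Hn]; auto.
  exfalso. assert (He : (f i - l > 0)%R) by lra.
  destruct (Hs _ He) as [N HN].
  specialize (HN (max N i) (Nat.le_max_l _ _)).
  assert (Hg := sum_ge_term f Hf (Nat.le_max_r N i)).
  unfold R_dist in HN. apply Rabs_def2 in HN. lra.
Qed.

Lemma guard_closed (sy : eqsys L) x : sys_wf sy -> standard sy ->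
  weak_tr sy Tau (diracN x) (diracN x) ->
  exists A : nat -> Prop, A x /\ forall Y, A Y -> tauOpt sy A Y.
Proof.
  intros Hw Hs [m1 [m2 [W1 [Hm W3]]]].
  destruct W1 as [mto1 [mx1 [Hn1 [Hc1 [H01 Hl1]]]]].
  destruct W3 as [mto3 [mx3 [Hn3 [Hc3 [H03 Hl3]]]]].
  set (A := (fun Y => (exists i, 0 < mto1 i Y) \/ 0 < m1 Y \/ (exists i, 0 < mto3 i Y))%R).
  assert (Ax : A x).
  { assert (H := H01 x). unfold diracN in H. rewrite Nat.eqb_refl in H.
    destruct (Rlt_dec 0 (mto1 0%nat x)).
    - left; eauto.
    - right; left. destruct (Hn1 0%nat x).
      assert (mx1 0%nat x = 1)%R by lra.
      assert (Hg := inf_sum_ge (f:=fun i => mx1 i x) (fun j => proj2 (Hn1 j x)) (Hl1 x) 0).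
      simpl in Hg. lra. }
  exists A; split; auto.
  assert (mono : forall (B C : nat -> Prop) Y, (forall y, B y -> C y) -> tauOpt sy B Y -> tauOpt sy C Y).
  { intros B C Y HBC [i [? [? [P [? ?]]]]]. exists i; split; auto; split; auto.
    exists P; split; auto. }
  intros Y [[i Hi]|[Hi|[i Hi]]].
  - eapply mono; [|exact (ctrans_supp Hw Hs (Hc1 i) Y Hi)]. intros y Hy. simpl in Hy.
    destruct (Hn1 (S i) y) as [Ha Hb].
    destruct (Rlt_dec 0 (mto1 (S i) y)); [left; eauto|].
    right; left.
    assert (Hg := inf_sum_ge (f:=fun i => mx1 i y) (fun j => proj2 (Hn1 j y)) (Hl1 y) (S i)).
    simpl in Hg. lra.
  - eapply mono; [|exact (ctrans_supp Hw Hs Hm Y Hi)]. intros y Hy. simpl in Hy. rewrite H03 in Hy.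
    destruct (Hn3 0%nat y) as [Ha Hb].
    destruct (Rlt_dec 0 (mto3 0%nat y)); [right; right; eauto|].
    assert (Hg := inf_sum_ge (f:=fun i => mx3 i y) (fun j => proj2 (Hn3 j y)) (Hl3 y) 0).
    simpl in Hg. unfold diracN in Hg. destruct (Nat.eqb_spec y x); [subst; auto|lra].
  - eapply mono; [|exact (ctrans_supp Hw Hs (Hc3 i) Y Hi)]. intros y Hy. simpl in Hy.
    destruct (Hn3 (S i) y) as [Ha Hb].
    destruct (Rlt_dec 0 (mto3 (S i) y)); [right; right; eauto|].
    assert (Hg := inf_sum_ge (f:=fun i => mx3 i y) (fun j => proj2 (Hn3 j y)) (Hl3 y) (S i)).
    simpl in Hg. unfold diracN in Hg. destruct (Nat.eqb_spec y x); [subst; auto|lra].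
Qed.

End SecE.

Section SecF.
Context {L : Type}.
Notation nexp := (nexp L).
Notation pexp := (pexp L).
Notation entry := (nat * nexp * nexp)%type.

Definition EntOK (b : list entry) (FV : list nat) (S0 E' : nexp) : Prop :=
  stdRhs (fm b) S0 /\ expr S0 /\ expr E' /\
  (forall v, In v (fvN S0) -> In v (fm b) \/ In v FV).
Definition AllOK (b : list entry) FV : Prop :=
  forall Y S0 E', In ((Y,S0),E') b -> EntOK b FV S0 E'.
Definition SAT (b : list entry) : Prop :=
  forall t, lcS t -> forall Y S0 E', In ((Y,S0),E') b ->
    eqN (fsubstN t E') (fsubstN t (fsubstN (lk b) S0)).
Definition Range (b : list entry) n0 n1 : Prop := forall Y, In Y (fm b) -> n0 <= Y < n1.
Definition UGin (W : list var) (V : list nat) : Prop :=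
  forall w, In w W -> exists v, In v V /\ w = inr v.

Definition Inv X S0 (tl : list entry) n0 n1 (E : nexp) : Prop :=
  n0 <= n1 /\ NoDup (fm (((X,S0),E)::tl)) /\ Range (((X,S0),E)::tl) n0 n1 /\
  AllOK (((X,S0),E)::tl) (fvN E) /\ SAT (((X,S0),E)::tl) /\ Kc (((X,S0),E)::tl) /\
  (forall A V, A X -> Clos (((X,S0),E)::tl) A V -> exists W, UGN E W /\ UGin W V).

Definition InvP (b : list entry) n0 n1 (P Ph : pexp) : Prop :=
  n0 <= n1 /\ NoDup (fm b) /\ Range b n0 n1 /\ AllOK b (fvP P) /\ SAT b /\ Kc b /\
  (stdP (fm b) Ph /\ NoDup (leavesP Ph) /\ fsubstP (lk b) Ph = P /\ probsP Ph /\ lcP 0 Ph) /\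
  (forall A V, (forall y, In y (leavesP Ph) -> A y) -> Clos b A V ->
     exists W, UGP P W /\ UGin W V).

Lemma summ_fv (S0 : nexp) v : summ S0 (NFV v) -> In v (fvN S0).
Proof.
  induction S0; simpl; intros H; try discriminate; try tauto.
  - injection H; auto.
  - apply in_or_app; tauto.
Qed.

Lemma LeavesIn_of b FV : AllOK b FV -> LeavesIn b.
Proof.
  intros H Y S0 E Hin P HP y Hy. destruct (H _ _ _ Hin) as [Hs _].
  destruct (okT_summ_pre (std_okT Hs) HP). eapply stdP_leaves; eauto.
Qed.

Lemma EntOK_transfer (b1 b : list entry) FV1 FV S0 E' : EntOK b1 FV1 S0 E' ->
  incl (fm b1) (fm b) -> (forall v, In v FV1 -> ~ In v (fm b)) -> incl FV1 FV ->
  EntOK b FV S0 E'.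
Proof.
  intros [Hs [He1 [He2 Hf]]] Hi Hn Hi2. split; [|split; [auto|split; [auto|]]].
  - eapply std_transfer; eauto. intros v Hv.
    destruct (Hf v (summ_fv _ _ Hv)) as [H|H].
    + exfalso. exact (okT_summ_fv (std_okT Hs) Hv H).
    + auto.
  - intros v Hv. destruct (Hf v Hv); auto.
Qed.

Lemma SAT_transfer (b1 b : list entry) : SAT b1 -> incl b1 b -> NoDup (fm b) -> NoDup (fm b1) ->
  (forall Y S0 E, In ((Y,S0),E) b1 -> forall v, In v (fvN S0) -> In v (fm b1) \/ ~ In v (fm b)) ->
  forall t, lcS t -> forall Y S0 E', In ((Y,S0),E') b1 ->
    eqN (fsubstN t E') (fsubstN t (fsubstN (lk b) S0)).
Proof.
  intros Hs Hi Hn Hn1 Hf t Ht Y S0 E' Hin.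
  rewrite ((proj1 fsubst_ext_both) S0 (lk b) (lk b1)); [eapply Hs; eauto|].
  intros v Hv. destruct (Hf _ _ _ Hin v Hv) as [H|H].
  - apply in_fm in H. destruct H as [s [e He]].
    rewrite (lk_in _ _ _ _ Hn (Hi _ He)). rewrite (lk_in _ _ _ _ Hn1 He). auto.
  - rewrite !lk_notin; auto. intro H'. apply H. unfold fm in *.
    apply in_map_iff in H'. destruct H' as [x [Hx1 Hx2]]. apply in_map_iff. eauto.
Qed.

Lemma range_notin (b : list entry) n0 n1 v : Range b n0 n1 -> v < n0 -> ~ In v (fm b).
Proof. intros Hr Hv H. apply Hr in H. lia. Qed.

Arguments range_notin {b n0 n1 v} _ _.
Arguments EntOK_transfer {b1 b FV1 FV S0 E'} _ _ _ _.
Arguments SAT_transfer {b1 b} _ _ _ _ _.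
Arguments LeavesIn_of {b FV} _.

Lemma incl_fm (b1 b : list entry) : incl b1 b -> incl (fm b1) (fm b).
Proof. intros H v Hv. apply in_fm in Hv. destruct Hv as [s [e He]]. apply in_fm; eauto. Qed.

Lemma ug_dirac_of (E : nexp) W : UGN E W -> UGP (PDirac E) W.
Proof. constructor; auto. Qed.

Lemma case_nil n0 : Inv n0 NNil [] n0 (S n0) NNil.
Proof.
  unfold Inv. split; [lia|]. split; [constructor; [simpl; tauto|constructor]|].
  split; [intros Y [HY|[]]; simpl in HY; lia|].
  split; [|split; [|split]].
  - intros Y S0 E' [H|[]]. injection H; intros; subst.
    split; [left; auto|]. split; [split; simpl; auto|]. split; [split; simpl; auto|].
    simpl; tauto.
  - intros t Ht Y S0 E' [H|[]]. injection H; intros; subst. apply eqN_refl.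
  - intros A HC Y HY. destruct (HC Y HY) as [S0 [E [[H|[]] HO]]].
    injection H; intros; subst.
    destruct HO as [[P [HP _]]|[v [HV _]]]; simpl in *; auto.
  - intros A V HA HC. destruct (HC n0 HA) as [S0 [E [[H|[]] HO]]].
    injection H; intros; subst.
    destruct HO as [[P [HP _]]|[v [HV HS]]]; simpl in *; tauto.
Qed.

Lemma case_fv y n0 : y < n0 -> Inv n0 (NFV y) [] n0 (S n0) (NFV y).
Proof.
  intro Hy. unfold Inv. split; [lia|]. split; [constructor; [simpl; tauto|constructor]|].
  split; [intros Y [HY|[]]; simpl in HY; lia|].
  split; [|split; [|split]].
  - intros Y S0 E' [H|[]]. injection H; intros; subst.
    split; [right; simpl; lia|]. split; [split; simpl; auto|]. split; [split; simpl; auto|].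
    simpl; tauto.
  - intros t Ht Y S0 E' [H|[]]. injection H; intros; subst. simpl.
    rewrite lk_cons. match goal with |- context [Nat.eqb y ?z] => destruct (Nat.eqb_spec y z) end;
      [lia|apply eqN_refl].
  - intros A HC Y HY. destruct (HC Y HY) as [S0 [E [[H|[]] HO]]].
    injection H; intros; subst.
    destruct HO as [[P [HP _]]|[v [HV _]]]; simpl in *; [discriminate|auto].
  - intros A V HA HC. destruct (HC n0 HA) as [S0 [E [[H|[]] HO]]].
    injection H; intros; subst.
    destruct HO as [[P [HP _]]|[v [HV HS]]]; simpl in *; [discriminate|].
    injection HS; intros; subst. eexists; split; [constructor|].
    intros w [Hw|[]]; subst; eexists; split; [eassumption|reflexivity].
Qed.


Lemma case_dirac X S0 tl n0 n1 (E : nexp) : Inv X S0 tl n0 n1 E ->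
  InvP (((X,S0),E)::tl) n0 n1 (PDirac E) (PDirac (NFV X)).
Proof.
  intros [Hle [Hnd [Hr [Hok [Hsat [Hk HI]]]]]].
  split; [auto|]. split; [auto|]. split; [auto|]. split; [exact Hok|].
  split; [auto|]. split; [auto|]. split.
  - split; [simpl; auto|]. split; [constructor; [simpl; tauto|constructor]|].
    split; [simpl; rewrite lk_cons, Nat.eqb_refl; auto|]. split; simpl; auto.
  - intros A V HA HC. destruct (HI A V) as [W [HW HWV]]; [apply HA; simpl; auto|auto|].
    exists W; split; auto. constructor; auto.
Qed.

Lemma case_oplus p (P Q Ph Qh : pexp) b1 b2 n0 n1 n2 :
  InvP b1 n0 n1 P Ph -> InvP b2 n1 n2 Q Qh ->
  (forall v, In v (fvP P) -> v < n0) -> (forall v, In v (fvP Q) -> v < n0) ->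
  (0 < p < 1)%R ->
  InvP (b1 ++ b2) n0 n2 (POplus p P Q) (POplus p Ph Qh).
Proof.
  intros [Hle1 [Hnd1 [Hr1 [Hok1 [Hsat1 [Hk1 [[Hs1 [Hnl1 [Hsub1 [Hpr1 Hlc1]]]] HI1]]]]]]]
         [Hle2 [Hnd2 [Hr2 [Hok2 [Hsat2 [Hk2 [[Hs2 [Hnl2 [Hsub2 [Hpr2 Hlc2]]]] HI2]]]]]]] HfP HfQ Hp.
  assert (Hdis : forall v, In v (fm b1) -> ~ In v (fm b2)).
  { intros v H1 H2. apply Hr1 in H1. apply Hr2 in H2. lia. }
  assert (Hnd : NoDup (fm (b1 ++ b2))) by (rewrite fm_app; apply NoDup_app; auto).
  assert (Hr : Range (b1 ++ b2) n0 n2).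
  { intros v Hv. rewrite fm_app in Hv. apply in_app_or in Hv.
    destruct Hv as [Hv|Hv]; [apply Hr1 in Hv|apply Hr2 in Hv]; lia. }
  assert (Hi1 : incl b1 (b1 ++ b2)) by (intros e He; apply in_or_app; auto).
  assert (Hi2 : incl b2 (b1 ++ b2)) by (intros e He; apply in_or_app; auto).
  split; [lia|]. split; [auto|]. split; [auto|].
  split.
  { intros Y S0 E' Hin. apply in_app_or in Hin. destruct Hin as [Hin|Hin].
    - apply (EntOK_transfer (Hok1 _ _ _ Hin)); [apply incl_fm; auto| |].
      + intros v Hv. apply (range_notin Hr); auto.
      + intros v Hv; simpl; apply in_or_app; auto.
    - apply (EntOK_transfer (Hok2 _ _ _ Hin)); [apply incl_fm; auto| |].
      + intros v Hv. apply (range_notin Hr); auto.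
      + intros v Hv; simpl; apply in_or_app; auto. }
  split.
  { intros t Ht Y S0 E' Hin. apply in_app_or in Hin. destruct Hin as [Hin|Hin].
    - eapply (SAT_transfer Hsat1); eauto. intros Y' S' E'' Hin' v Hv.
      destruct (proj2 (proj2 (proj2 (Hok1 _ _ _ Hin'))) v Hv) as [H|H]; [left; auto|].
      right. apply (range_notin Hr). apply HfP; auto.
    - eapply (SAT_transfer Hsat2); eauto. intros Y' S' E'' Hin' v Hv.
      destruct (proj2 (proj2 (proj2 (Hok2 _ _ _ Hin'))) v Hv) as [H|H]; [left; auto|].
      right. apply (range_notin Hr). apply HfQ; auto. }
  split; [apply Kc_app; auto; eapply LeavesIn_of; eauto|].
  split.
  - split; [simpl; split; (eapply stdP_mono; [eauto|]); rewrite fm_app; intros z Hz;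
      apply in_or_app; auto|].
    split; [simpl; apply NoDup_app; auto; intros y Hy1 Hy2;
      apply (Hdis y); eapply stdP_leaves; eauto|].
    split; [simpl; f_equal|].
    + rewrite <- Hsub1. apply (proj2 fsubst_ext_both). intros v Hv.
      apply lk_app_l. eapply stdP_fv; eauto.
    + rewrite <- Hsub2. apply (proj2 fsubst_ext_both). intros v Hv.
      apply lk_app_r. intro H. apply (Hdis v H). eapply stdP_fv; eauto.
    + simpl; split; auto.
  - intros A V HA HC. simpl in HA.
    destruct (HI1 (fun y => A y /\ In y (fm b1)) V) as [W1 [HW1 HV1]].
    { intros y Hy. split; [apply HA; apply in_or_app; auto|eapply stdP_leaves; eauto]. }
    { eapply Clos_restrict; eauto. eapply LeavesIn_of; eauto. }
    destruct (HI2 (fun y => A y /\ In y (fm b2)) V) as [W2 [HW2 HV2]].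
    { intros y Hy. split; [apply HA; apply in_or_app; auto|eapply stdP_leaves; eauto]. }
    { eapply Clos_restrict; eauto. eapply LeavesIn_of; eauto. }
    exists (W1 ++ W2); split; [constructor; auto|].
    intros w Hw. apply in_app_or in Hw. destruct Hw; auto.
Qed.

Lemma case_pre a (P Ph : pexp) b n0 n1 : InvP b (S n0) n1 P Ph ->
  (forall v, In v (fvP P) -> v < n0) -> lcP 0 P -> probsP P ->
  Inv n0 (NPre a Ph) b n0 n1 (NPre a P).
Proof.
  intros [Hle [Hnd [Hr [Hok [Hsat [Hk [[Hstd [Hnl [Hsub [Hpr Hlc]]]] HI]]]]]]] Hfv HlcP HprP.
  assert (Hn0 : ~ In n0 (fm b)) by (intro H; apply Hr in H; lia).
  assert (HfmB : fm (((n0, NPre a Ph), NPre a P) :: b) = n0 :: fm b) by reflexivity.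
  assert (HndB : NoDup (fm (((n0, NPre a Ph), NPre a P) :: b)))
    by (rewrite HfmB; constructor; auto).
  assert (HrB : Range (((n0, NPre a Ph), NPre a P) :: b) n0 n1).
  { intros Y HY. rewrite HfmB in HY. destruct HY as [<-|HY]; [lia|apply Hr in HY; lia]. }
  assert (Hib : incl b (((n0, NPre a Ph), NPre a P) :: b)) by (intros e He; right; auto).
  unfold Inv. split; [lia|]. split; [auto|]. split; [auto|].
  split.
  { intros Y S0 E' [Heq|Hin].
    - injection Heq; intros Ha Hb Hc; subst Y S0 E'. split.
      + right. simpl. split; auto. eapply stdP_mono; eauto. intros z Hz; right; auto.
      + split; [split; simpl; auto|]. split; [split; simpl; auto|].
        intros v Hv. left. rewrite HfmB. right. eapply stdP_fv; eauto.
    - apply (EntOK_transfer (Hok _ _ _ Hin)); [apply incl_fm; auto| |].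
      + intros v Hv. apply (range_notin HrB); auto.
      + intros v Hv; simpl; auto. }
  split.
  { intros t Ht Y S0 E' [Heq|Hin].
    - injection Heq; intros Ha Hb Hc; subst Y S0 E'. simpl.
      rewrite ((proj2 fsubst_ext_both) Ph _ (lk b)).
      + rewrite Hsub. apply eqN_refl.
      + intros v Hv. rewrite lk_cons. destruct (Nat.eqb_spec v n0); auto.
        subst. exfalso. apply Hn0. eapply stdP_fv; eauto.
    - eapply (SAT_transfer Hsat); eauto. intros Y' S' E'' Hin' v Hv.
      destruct (proj2 (proj2 (proj2 (Hok _ _ _ Hin'))) v Hv); auto.
      right. apply (range_notin HrB); auto. }
  split.
  { apply Kc_cons; auto; [eapply LeavesIn_of; eauto|].
    intros P' HP'. simpl in HP'. injection HP'; intros; subst.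
    split; [eapply stdP_leaves_ne; eauto|intros; eapply stdP_leaves; eauto]. }
  intros A V HA HC. destruct (HC n0 HA) as [S0 [E' [Hin HO]]].
  destruct (entry_uniq _ _ _ _ _ _ HndB Hin (or_introl eq_refl)) as [-> ->].
  destruct HO as [[P' [HP' HPl]]|[v [_ Hv]]]; [|simpl in Hv; discriminate].
  simpl in HP'. injection HP'; intros; subst.
  destruct (HI (fun y => A y /\ In y (fm b)) V) as [W [HW HWV]].
  - intros y Hy; split; [apply HPl; auto|eapply stdP_leaves; eauto].
  - eapply Clos_restrict; eauto. eapply LeavesIn_of; eauto.
  - exists W; split; auto. constructor; auto.
Qed.

Lemma Opt_mkSum A V (S1 S2 : nexp) : Opt A V (mkSum S1 S2) -> Opt A V S1 \/ Opt A V S2.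
Proof.
  intros [[P [HP HPl]]|[v [Hv HS]]]; apply summ_mkSum in HP || apply summ_mkSum in HS.
  - destruct HP; [left|right]; left; exists P; auto.
  - destruct HS; [left|right]; right; exists v; auto.
Qed.

Lemma std_leaves_in Xs (S0 : nexp) P y : stdRhs Xs S0 -> summ S0 (NPre Tau P) ->
  In y (leavesP P) -> In y Xs.
Proof.
  intros Hs HP Hy. destruct (okT_summ_pre (std_okT Hs) HP). eapply stdP_leaves; eauto.
Qed.

Lemma case_sum X1 S1 t1 X2 S2 t2 n0 n1 n2 (E F : nexp) :
  Inv X1 S1 t1 (S n0) n1 E -> Inv X2 S2 t2 n1 n2 F ->
  (forall v, In v (fvN E) -> v < n0) -> (forall v, In v (fvN F) -> v < n0) ->
  expr (NSum E F) ->
  Inv n0 (mkSum S1 S2) ((((X1,S1),E)::t1) ++ (((X2,S2),F)::t2)) n0 n2 (NSum E F).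
Proof.
  set (b1 := ((X1,S1),E)::t1). set (b2 := ((X2,S2),F)::t2).
  intros [Hle1 [Hnd1 [Hr1 [Hok1 [Hsat1 [Hk1 HI1]]]]]]
         [Hle2 [Hnd2 [Hr2 [Hok2 [Hsat2 [Hk2 HI2]]]]]] HfE HfF HeEF.
  fold b1 in Hnd1, Hr1, Hok1, Hsat1, Hk1, HI1.
  fold b2 in Hnd2, Hr2, Hok2, Hsat2, Hk2, HI2.
  set (B := ((n0, mkSum S1 S2), NSum E F) :: b1 ++ b2).
  assert (Hdis : forall v, In v (fm b1) -> ~ In v (fm b2)).
  { intros v H1 H2. apply Hr1 in H1. apply Hr2 in H2. lia. }
  assert (Hnd12 : NoDup (fm (b1 ++ b2))) by (rewrite fm_app; apply NoDup_app; auto).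
  assert (Hn0 : ~ In n0 (fm (b1 ++ b2))).
  { rewrite fm_app. intro H. apply in_app_or in H. destruct H as [H|H];
      [apply Hr1 in H|apply Hr2 in H]; lia. }
  assert (HfmB : fm B = n0 :: fm (b1 ++ b2)) by reflexivity.
  assert (HndB : NoDup (fm B)) by (rewrite HfmB; constructor; auto).
  assert (HrB : Range B n0 n2).
  { intros Y HY. rewrite HfmB, fm_app in HY. destruct HY as [<-|HY]; [lia|].
    apply in_app_or in HY. destruct HY as [HY|HY]; [apply Hr1 in HY|apply Hr2 in HY]; lia. }
  assert (Hi1 : incl b1 B) by (intros e He; right; apply in_or_app; auto).
  assert (Hi2 : incl b2 B) by (intros e He; right; apply in_or_app; auto).
  assert (HL1 := LeavesIn_of Hok1). assert (HL2 := LeavesIn_of Hok2).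
  assert (Hh1 := Hok1 _ _ _ (or_introl eq_refl)).
  assert (Hh2 := Hok2 _ _ _ (or_introl eq_refl)).
  destruct Hh1 as [Hs1 [He1 [HeE Hf1]]]. destruct Hh2 as [Hs2 [He2 [HeF Hf2]]].
  assert (HfEF : forall v, In v (fvN (NSum E F)) -> ~ In v (fm B)).
  { intros v Hv. apply (range_notin HrB). simpl in Hv. apply in_app_or in Hv.
    destruct Hv; auto. }
  assert (Hsat1' : forall t, lcS t -> forall Y S0 E', In ((Y,S0),E') b1 ->
    eqN (fsubstN t E') (fsubstN t (fsubstN (lk B) S0))).
  { apply (SAT_transfer Hsat1); auto. intros Y S0 E' Hin v Hv.
    destruct (proj2 (proj2 (proj2 (Hok1 _ _ _ Hin))) v Hv) as [H|H]; [left; auto|].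
    right. apply HfEF. simpl; apply in_or_app; auto. }
  assert (Hsat2' : forall t, lcS t -> forall Y S0 E', In ((Y,S0),E') b2 ->
    eqN (fsubstN t E') (fsubstN t (fsubstN (lk B) S0))).
  { apply (SAT_transfer Hsat2); auto. intros Y S0 E' Hin v Hv.
    destruct (proj2 (proj2 (proj2 (Hok2 _ _ _ Hin))) v Hv) as [H|H]; [left; auto|].
    right. apply HfEF. simpl; apply in_or_app; auto. }
  unfold Inv. fold b1 b2 B. split; [lia|]. split; [auto|]. split; [auto|].
  split.
  { intros Y S0 E' [Heq|Hin].
    - injection Heq; intros Ha Hb Hc; subst Y S0 E'. split; [|split; [|split]].
      + apply mkSum_std.
        * eapply std_transfer; [exact Hs1|apply incl_fm; auto|].
          intros v Hv. destruct (Hf1 v (summ_fv _ _ Hv)) as [H|H].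
          -- exfalso. exact (okT_summ_fv (std_okT Hs1) Hv H).
          -- apply HfEF; simpl; apply in_or_app; auto.
        * eapply std_transfer; [exact Hs2|apply incl_fm; auto|].
          intros v Hv. destruct (Hf2 v (summ_fv _ _ Hv)) as [H|H].
          -- exfalso. exact (okT_summ_fv (std_okT Hs2) Hv H).
          -- apply HfEF; simpl; apply in_or_app; auto.
      + destruct He1, He2; split; [apply lc_mkSum|apply probs_mkSum]; auto.
      + auto.
      + intros v Hv. apply fv_mkSum in Hv. destruct Hv as [Hv|Hv].
        * destruct (Hf1 v Hv); [left; apply (incl_fm Hi1); auto|right; simpl; apply in_or_app; auto].
        * destruct (Hf2 v Hv); [left; apply (incl_fm Hi2); auto|right; simpl; apply in_or_app; auto].
    - apply in_app_or in Hin. destruct Hin as [Hin|Hin].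
      + apply (EntOK_transfer (Hok1 _ _ _ Hin)); [apply incl_fm; auto| |].
        * intros v Hv; apply HfEF; simpl; apply in_or_app; auto.
        * intros v Hv; simpl; apply in_or_app; auto.
      + apply (EntOK_transfer (Hok2 _ _ _ Hin)); [apply incl_fm; auto| |].
        * intros v Hv; apply HfEF; simpl; apply in_or_app; auto.
        * intros v Hv; simpl; apply in_or_app; auto. }
  split.
  { intros t Ht Y S0 E' [Heq|Hin].
    - injection Heq; intros Ha Hb Hc; subst Y S0 E'. simpl fsubstN at 1.
      eapply eqN_trans.
      + apply eqN_sum; [apply (Hsat1' t Ht _ _ _ (or_introl eq_refl))
                       |apply (Hsat2' t Ht _ _ _ (or_introl eq_refl))].
      + rewrite !(proj1 fsubst_comp_both). apply eqN_mkSum.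
    - apply in_app_or in Hin. destruct Hin as [Hin|Hin]; eauto. }
  split.
  { apply Kc_cons; auto.
    - apply Kc_app; auto.
    - intros Y S0 E' He P HP y Hy. rewrite fm_app. apply in_app_or in He. destruct He as [He|He].
      + apply in_or_app; left. eapply HL1; eauto.
      + apply in_or_app; right. eapply HL2; eauto.
    - intros P HP. simpl in HP. apply summ_mkSum in HP. destruct HP as [HP|HP].
      + destruct (okT_summ_pre (std_okT Hs1) HP).
        split; [eapply stdP_leaves_ne; eauto|intros y Hy; rewrite fm_app; apply in_or_app; left].
        eapply stdP_leaves; eauto.
      + destruct (okT_summ_pre (std_okT Hs2) HP).
        split; [eapply stdP_leaves_ne; eauto|intros y Hy; rewrite fm_app; apply in_or_app; right].
        eapply stdP_leaves; eauto. }
  intros A V HA HC. destruct (HC n0 HA) as [S0 [E' [Hin HO]]].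
  destruct (entry_uniq _ _ _ _ _ _ HndB Hin (or_introl eq_refl)) as [-> ->].
  apply Opt_mkSum in HO. destruct HO as [HO|HO].
  - destruct (HI1 (fun y => (A y /\ In y (fm b1)) \/ y = X1) V) as [W [HW HWV]].
    + right; auto.
    + eapply Clos_add; [eapply Clos_restrict; eauto|left; reflexivity|].
      apply Opt_restrict; auto. intros P HP y Hy. eapply std_leaves_in; eauto.
    + exists W; split; auto. constructor; auto.
  - destruct (HI2 (fun y => (A y /\ In y (fm b2)) \/ y = X2) V) as [W [HW HWV]].
    + right; auto.
    + eapply Clos_add; [eapply Clos_restrict; eauto|left; reflexivity|].
      apply Opt_restrict; auto. intros P HP y Hy. eapply std_leaves_in; eauto.
    + exists W; split; auto. apply ug_sumr; auto.
Qed.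

End SecF.

Section SecG.
Context {L : Type}.
Notation nexp := (nexp L).
Notation pexp := (pexp L).
Notation entry := (nat * nexp * nexp)%type.

Definition fr (x : nat) (S1 R : nexp) (e : entry) : entry :=
  ((fst (fst e), nz (fsubstN (subx x S1) (snd (fst e)))), fsubstN (subx x R) (snd e)).

Lemma fm_map_fr x S1 R (t : list entry) : fm (map (fr x S1 R) t) = fm t.
Proof. unfold fm. rewrite map_map. apply map_ext. intros [[? ?] ?]; reflexivity. Qed.

Lemma lcS_subx x (u : nexp) : lcN 0 u -> lcS (subx x u).
Proof. intros H v. unfold subx. destruct (Nat.eqb v x); simpl; auto. Qed.

Lemma probs_subx x (u : nexp) : probsN u -> forall v, probsN (subx x u v).
Proof. intros H v. unfold subx. destruct (Nat.eqb v x); simpl; auto. Qed.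

Lemma Opt_monoV A V V' (S0 : nexp) : incl V V' -> Opt A V S0 -> Opt A V' S0.
Proof. intros H [?|[v [? ?]]]; [left; auto|right; exists v; auto]. Qed.

Lemma opt_back A V x (S1 S0 : nexp) Xs : Opt A V (nz (fsubstN (subx x S1) S0)) ->
  okT Xs S0 -> ~ In x Xs ->
  Opt A (x :: V) S0 /\ (Opt A V S0 \/ (summ S0 (NFV x) /\ Opt A V S1)).
Proof.
  intros HO Hok Hx. unfold Opt in *. destruct HO as [[P [HP HPl]]|[v [Hv HS]]].
  - apply (proj1 (summ_nz _ _)) in HP. destruct (summ_subx Hok Hx HP) as [[H1 _]|[H1 H2]].
    + split; [left; exists P; auto|left; left; exists P; auto].
    + split; [right; exists x; simpl; auto|right; split; auto; left; exists P; auto].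
  - apply (proj1 (summ_nz _ _)) in HS. destruct (summ_subx Hok Hx HS) as [[H1 _]|[H1 H2]].
    + split; [right; exists v; simpl; auto|left; right; exists v; auto].
    + split; [right; exists x; simpl; auto|right; split; auto; right; exists v; auto].
Qed.

Arguments opt_back {A V x S1 S0 Xs} _ _ _.

Lemma rec_contra (B : nexp) x W : ~ unguarded_in B (inl 0) -> ~ In x (fvN B) ->
  UGN (open B (NFV x)) W -> UGin W [x] -> False.
Proof.
  intros Hg Hx HW HWV.
  destruct (@rec_ug _ B x [] W Hg Hx HW) as [W'' [HW'' HV'']].
  - intros w Hw. apply HWV; auto.
  - destruct W'' as [|w W'']; [exact (proj1 ug_nonempty_both _ _ HW'' eq_refl)|].
    destruct (HV'' w (or_introl eq_refl)) as [v [[] _]].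
Qed.

Lemma case_rec X1 S1 (t : list entry) n0 n1 (B : nexp) :
  Inv X1 S1 t (S n0) n1 (open B (NFV n0)) -> lcN 1 B -> probsN B ->
  ~ unguarded_in B (inl 0) -> (forall v, In v (fvN B) -> v < n0) ->
  Inv X1 (nz (fsubstN (subx n0 S1) S1)) (map (fr n0 S1 (NRec B)) t) n0 n1 (NRec B).
Proof.
  set (x := n0). set (F := open B (NFV x)). set (R := NRec B).
  set (b := ((X1,S1),F)::t).
  set (b' := ((X1, nz (fsubstN (subx x S1) S1)), R) :: map (fr x S1 R) t).
  intros [Hle [Hnd [Hr [Hok [Hsat [Hk HI]]]]]] HlcB HprB Hg HfB.
  fold b in Hnd, Hr, Hok, Hsat, Hk, HI.
  assert (Hfm : fm b' = fm b).
  { unfold b', b. simpl. f_equal. apply fm_map_fr. }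
  assert (Hxb : ~ In x (fm b)) by (intro H; apply Hr in H; unfold x in H; lia).
  assert (HxB : ~ In x (fvN B)) by (intro H; apply HfB in H; unfold x in H; lia).
  assert (HlcR : lcN 0 R) by exact HlcB.
  assert (HprR : probsN R) by exact HprB.
  destruct (Hok _ _ _ (or_introl eq_refl)) as [Hs1 [He1 [HeF Hf1]]].
  assert (Hok1 := std_okT Hs1).
  assert (Hnx : ~ summ S1 (NFV x)).
  { intro Hs. destruct (HI (fun y => y = X1) [x]) as [W [HW HWV]]; [reflexivity| |].
    - intros Y HY. subst Y. exists S1, F; split; [left; reflexivity|].
      right. exists x; simpl; auto.
    - exact (rec_contra Hg HxB HW HWV). }
  assert (Hxs1 : ~ In x (fvN S1)).
  { intro H. destruct (okT_fv Hok1 H); auto. }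
  set (rho := fun (tau : nat -> nexp) v => fsubstN tau (subx x R v)).
  assert (Hrho : forall tau, lcS tau -> lcS (rho tau)).
  { intros tau Ht v. unfold rho. apply (proj1 (lc_fsubst_both Ht)). apply lcS_subx; auto. }
  assert (HRF : forall tau, lcS tau -> eqN (fsubstN tau R) (fsubstN (rho tau) F)).
  { intros tau Ht. unfold F, open.
    rewrite (proj1 (fsubst_open_both (Hrho tau Ht))).
    rewrite ((proj1 fsubst_ext_both) B (rho tau) tau).
    + replace (fsubstN (rho tau) (NFV x)) with (fsubstN tau R)
        by (unfold rho, subx; simpl; rewrite Nat.eqb_refl; reflexivity).
      unfold R. simpl fsubstN. apply ax_R1.
      simpl. apply (proj1 (lc_fsubst_both Ht)); auto.
    + intros v Hv. unfold rho, subx. destruct (Nat.eqb_spec v x); [subst; tauto|reflexivity]. }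
  assert (Hent : forall Y S' E', In ((Y,S'),E') b' -> exists S0 E, In ((Y,S0),E) b /\
      S' = nz (fsubstN (subx x S1) S0) /\
      forall tau, lcS tau -> eqN (fsubstN tau E') (fsubstN (rho tau) E)).
  { intros Y S' E' [Heq|Hin].
    - injection Heq; intros Ha Hb Hc; subst Y S' E'.
      exists S1, F; split; [left; reflexivity|split; [reflexivity|]]. exact HRF.
    - apply in_map_iff in Hin. destruct Hin as [[[Y0 S0] E0] [Heq Hin]].
      unfold fr in Heq; simpl in Heq. injection Heq; intros Ha Hb Hc; subst.
      exists S0, E0; split; [right; auto|split; [reflexivity|]].
      intros tau Ht. rewrite (proj1 fsubst_comp_both). apply eqN_refl. }
  assert (Hndb' : NoDup (fm b')) by (rewrite Hfm; auto).
  unfold Inv. fold R b'. split; [lia|]. split; [auto|].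
  split; [intros Y HY; rewrite Hfm in HY; apply Hr in HY; unfold x in *; lia|].
  split.
  { intros Y S' E' Hin. destruct (Hent _ _ _ Hin) as [S0 [E [Hin0 [-> _]]]].
    destruct (Hok _ _ _ Hin0) as [Hs [He [HeE Hf]]].
    split; [|split; [|split]].
    - rewrite Hfm. apply okT_nz. apply okT_subx; auto. apply std_okT; auto.
    - destruct He. split.
      + apply lc_nz. apply (proj1 (lc_fsubst_both (lcS_subx x S1 (proj1 He1)))); auto.
      + apply probs_nz. apply (proj1 (probs_fsubst_both _ (probs_subx x S1 (proj2 He1)))); auto.
    - destruct Hin as [Heq|Hin].
      + injection Heq; intros; subst. split; auto.
      + apply in_map_iff in Hin. destruct Hin as [[[Y0 S0'] E0] [Heq Hin]].
        unfold fr in Heq; simpl in Heq. injection Heq; intros Ha Hb Hc; subst.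
        destruct (Hok _ _ _ (or_intror Hin)) as [_ [_ [[HlE HpE] _]]].
        split.
        * apply (proj1 (lc_fsubst_both (lcS_subx x R HlcR))); auto.
        * apply (proj1 (probs_fsubst_both _ (probs_subx x R HprR))); auto.
    - intros v Hv. rewrite Hfm. apply fv_nz in Hv.
      apply (proj1 (fv_fsubst_both _)) in Hv. destruct Hv as [u [Hu Hv]].
      unfold subx in Hv. destruct (Nat.eqb_spec u x).
      + subst u. destruct (Hf1 v Hv) as [H|H]; [left; auto|right].
        apply (proj1 (fv_open_both _)) in H. destruct H as [H|H]; auto.
        simpl in H. destruct H as [H|[]]. subst. tauto.
      + simpl in Hv. destruct Hv as [Hv|[]]. subst u.
        destruct (Hf v Hu) as [H|H]; [left; auto|right].
        apply (proj1 (fv_open_both _)) in H. destruct H as [H|H]; auto.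
        simpl in H. destruct H as [H|[]]. subst. tauto. }
  split.
  { intros tau Ht Y S' E' Hin.
    destruct (Hent _ _ _ Hin) as [S0 [E [Hin0 [-> HE]]]].
    destruct (Hok _ _ _ Hin0) as [Hs [He [HeE Hf]]].
    set (th := fun v => fsubstN (rho tau) (lk b v)).
    set (th' := fun v => fsubstN tau (lk b' v)).
    assert (Hth : forall v, v <> x -> eqN (th v) (th' v)).
    { intros v Hvx. unfold th, th'. destruct (in_dec Nat.eq_dec v (fm b)) as [Hv|Hv].
      - rewrite <- Hfm in Hv. apply in_fm in Hv. destruct Hv as [S2 [E2 HE2]].
        destruct (Hent _ _ _ HE2) as [S3 [E3 [HE3 [_ Hrel]]]].
        rewrite (lk_in _ _ _ _ Hndb' HE2), (lk_in _ _ _ _ Hnd HE3).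
        apply eqN_sym. apply Hrel; auto.
      - rewrite !lk_notin; [|rewrite Hfm; auto|auto]. simpl. unfold rho, subx.
        destruct (Nat.eqb_spec v x); [contradiction|]. simpl. apply eqN_refl. }
    assert (HxR : eqN (fsubstN tau R) (fsubstN th' S1)).
    { eapply eqN_trans; [apply HRF; auto|].
      eapply eqN_trans.
      - assert (H := Hsat (rho tau) (Hrho tau Ht) _ _ _ (or_introl eq_refl)).
        rewrite (proj1 fsubst_comp_both) in H. exact H.
      - apply (proj1 (fsubst_cong_both _ _)); [apply (okT_norec Hok1)|].
        intros v Hv. apply Hth. intro; subst; tauto. }
    eapply eqN_trans; [apply HE; auto|].
    eapply eqN_trans.
    { assert (H := Hsat (rho tau) (Hrho tau Ht) _ _ _ Hin0).
      rewrite (proj1 fsubst_comp_both) in H. exact H. }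
    rewrite (proj1 fsubst_comp_both).
    eapply eqN_trans; [|apply (eqN_nz th')].
    rewrite (proj1 fsubst_comp_both).
    apply (proj1 (fsubst_cong_both _ _)); [apply (okT_norec (std_okT Hs))|].
    intros v Hv. unfold subx. destruct (Nat.eqb_spec v x).
    - subst v. rewrite (lk_notin _ _ Hxb). simpl. unfold rho, subx.
      rewrite Nat.eqb_refl. exact HxR.
    - simpl. apply Hth; auto. }
  split.
  { intros A HC Y HY.
    destruct (classic (exists Y', A Y' /\ exists S0 E, In ((Y',S0),E) b /\
                 summ S0 (NFV x) /\ Opt A [] S1)) as [Hb|Hnb].
    - destruct Hb as [Y' [HY' [S0 [E [HinE [HsE HO1]]]]]].
      destruct (HI (fun y => A y \/ y = X1) [x]) as [W [HW HWV]]; [right; reflexivity| |].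
      + intros y [Hy|Hy].
        * destruct (HC y Hy) as [S' [E' [Hin' HO']]].
          destruct (Hent _ _ _ Hin') as [S2 [E2 [Hin2 [-> _]]]].
          destruct (Hok _ _ _ Hin2) as [Hs2 _].
          destruct (opt_back HO' (std_okT Hs2) Hxb) as [HO2 _].
          exists S2, E2; split; auto. eapply Opt_mono; [|exact HO2]. simpl; auto.
        * subst y. exists S1, F; split; [left; reflexivity|].
          eapply Opt_mono; [|eapply Opt_monoV; [|exact HO1]]; [simpl; auto|intros z []].
      + exact (rec_contra Hg HxB HW HWV).
    - apply (Hk A) with Y; auto. intros y Hy.
      destruct (HC y Hy) as [S' [E' [Hin' HO']]].
      destruct (Hent _ _ _ Hin') as [S2 [E2 [Hin2 [-> _]]]].
      destruct (Hok _ _ _ Hin2) as [Hs2 _].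
      destruct (opt_back HO' (std_okT Hs2) Hxb) as [_ [HO2|[Hsx HO1]]].
      + exists S2, E2; split; auto.
      + exfalso. apply Hnb. exists y; split; auto. exists S2, E2; auto. }
  intros A V HA HC.
  destruct (HI A (x :: V) HA) as [W [HW HWV]].
  - intros y Hy. destruct (HC y Hy) as [S' [E' [Hin' HO']]].
    destruct (Hent _ _ _ Hin') as [S2 [E2 [Hin2 [-> _]]]].
    destruct (Hok _ _ _ Hin2) as [Hs2 _].
    destruct (opt_back HO' (std_okT Hs2) Hxb) as [HO2 _].
    exists S2, E2; split; auto.
  - exact (rec_ug Hg HxB HW HWV).
Qed.


End SecG.

Section SecH.
Context {L : Type}.
Notation nexp := (nexp L).
Notation pexp := (pexp L).
Notation entry := (nat * nexp * nexp)%type.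

Definition BuildN (E : nexp) : Prop := forall n0, expr E -> guardedN E ->
  (forall v, In v (fvN E) -> v < n0) -> exists X S0 tl n1, Inv X S0 tl n0 n1 E.

Lemma build_P K : (forall E, sizeN E < K -> BuildN E) ->
  forall (P : pexp), sizeP P <= K -> forall n0, lcP 0 P -> probsP P -> guardedP P ->
  (forall v, In v (fvP P) -> v < n0) -> exists b Ph n1, InvP b n0 n1 P Ph.
Proof.
  intros IH P. induction P as [E|p P IHP Q IHQ]; simpl; intros Hs n0 Hlc Hpr Hg Hfv.
  - destruct (IH E ltac:(lia) n0 (conj Hlc Hpr) Hg Hfv) as [X [S0 [tl [n1 Hinv]]]].
    exists (((X,S0),E)::tl), (PDirac (NFV X)), n1. apply case_dirac; auto.
  - destruct Hlc as [HlP HlQ]. destruct Hpr as [Hp [HpP HpQ]]. destruct Hg as [HgP HgQ].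
    destruct (IHP ltac:(lia) n0 HlP HpP HgP) as [b1 [Ph [n1 H1]]].
    { intros v Hv; apply Hfv; apply in_or_app; auto. }
    assert (Hle : n0 <= n1) by (destruct H1; auto).
    destruct (IHQ ltac:(lia) n1 HlQ HpQ HgQ) as [b2 [Qh [n2 H2]]].
    { intros v Hv. assert (v < n0) by (apply Hfv; apply in_or_app; auto). lia. }
    exists (b1 ++ b2), (POplus p Ph Qh), n2.
    apply case_oplus with n1; auto; intros v Hv; apply Hfv; apply in_or_app; auto.
Qed.

Lemma build m : forall (E : nexp), sizeN E < m -> BuildN E.
Proof.
  induction m as [|m IHm]; intros E Hs; [lia|].
  intros n0 [Hlc Hpr] Hg Hfv.
  destruct E as [| y | k | a P | B | E F]; simpl in *.
  - exists n0, NNil, [], (S n0). apply case_nil.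
  - exists n0, (NFV y), [], (S n0). apply case_fv. apply Hfv; auto.
  - lia.
  - destruct (@build_P (sizeP P) (fun E HE => IHm E ltac:(lia)) P (le_n _) (S n0) Hlc Hpr Hg)
      as [b [Ph [n1 HP]]].
    { intros v Hv; specialize (Hfv v Hv); lia. }
    exists n0, (NPre a Ph), b, n1. apply case_pre; auto.
  - destruct Hg as [Hug HgB].
    assert (HxB : ~ In n0 (fvN B)) by (intro H; specialize (Hfv n0 H); lia).
    destruct (IHm (open B (NFV n0))) with (n0 := S n0) as [X [S0 [tl [n1 Hinv]]]].
    + unfold open. rewrite (proj1 (size_open_both n0)). lia.
    + split.
      * unfold open. apply (proj1 (lc_open_both (NFV n0) I)); auto.
      * unfold open. apply (proj1 (probs_open_both (NFV n0) I)); auto.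
    + unfold open. apply (proj1 (guarded_open_both n0)); auto.
    + intros v Hv. unfold open in Hv. apply (proj1 (fv_open_both _)) in Hv.
      destruct Hv as [Hv|Hv]; [specialize (Hfv v Hv); lia|simpl in Hv; destruct Hv as [<-|[]]; lia].
    + eexists X, _, _, n1. eapply case_rec; [exact Hinv|auto..].
  - destruct Hlc as [HlE HlF]. destruct Hpr as [HpE HpF]. destruct Hg as [HgE HgF].
    destruct (IHm E ltac:(lia) (S n0) (conj HlE HpE) HgE) as [X1 [S1 [t1 [n1 H1]]]].
    { intros v Hv. assert (v < n0) by (apply Hfv; apply in_or_app; auto). lia. }
    assert (Hle : S n0 <= n1) by (destruct H1; auto).
    destruct (IHm F ltac:(lia) n1 (conj HlF HpF) HgF) as [X2 [S2 [t2 [n2 H2]]]].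
    { intros v Hv. assert (v < n0) by (apply Hfv; apply in_or_app; auto). lia. }
    eexists n0, _, _, n2. apply case_sum with (n1 := n1); eauto.
    + intros v Hv; apply Hfv; apply in_or_app; auto.
    + intros v Hv; apply Hfv; apply in_or_app; auto.
    + split; split; auto.
Qed.

End SecH.

Lemma nth_entry {L} (b : list (nat * nexp L * nexp L)) i : i < length b ->
  In ((nth i (fm b) 0, nth i (rh b) (NNil)), nth i (sl b) (NNil)) b.
Proof.
  revert i. induction b as [|[[y s] e] b IH]; simpl; intros i Hi; [lia|].
  destruct i as [|i]; [left; reflexivity|right]. apply IH. lia.
Qed.

Lemma fv_bound (l : list nat) : exists n, forall v, In v l -> v < n.
Proof.
  induction l as [|a l [n IH]]; [exists 0; intros v []|].
  exists (S (max a n)). intros v [<-|Hv]; [lia|specialize (IH v Hv); lia].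
Qed.

Theorem mainTheorem18 (L : Type) (E : nexp L) :
  expr E -> guardedN E ->
  exists sy : eqsys L,
    sys_wf sy /\ standard sy /\ sys_guarded sy /\
    (forall v, sysVar sy v -> In v (fvN E)) /\
    satisfies E sy.
Proof.
  intros He Hg. destruct (fv_bound (fvN E)) as [n0 Hn0].
  destruct (build (m := S (sizeN E)) (le_n _) (n0 := n0) He Hg Hn0) as [X [S0 [tl [n1 Hinv]]]].
  destruct Hinv as [Hle [Hnd [Hr [Hok [Hsat [Hk HI]]]]]].
  set (b := ((X,S0),E)::tl) in *.
  assert (Hlen : length (fm b) = length (rh b)) by (unfold fm, rh; rewrite !length_map; auto).
  assert (Hlen2 : length (sl b) = length (fm b)) by (unfold sl, fm; rewrite !length_map; auto).
  assert (Hlenb : length (fm b) = length b) by (unfold fm; rewrite length_map; auto).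
  assert (Hrh : forall S, In S (rh b) -> exists Y E', In ((Y,S),E') b).
  { intros S HS. unfold rh in HS. apply in_map_iff in HS. destruct HS as [[[y s] e] [Heq Hin]].
    simpl in Heq. subst. eauto. }
  assert (Hsl : forall E', In E' (sl b) -> exists Y S, In ((Y,S),E') b).
  { intros E' HS. unfold sl in HS. apply in_map_iff in HS. destruct HS as [[[y s] e] [Heq Hin]].
    simpl in Heq. subst. eauto. }
  assert (Hwf : sys_wf (EqSys (fm b) (rh b))).
  { split; [exact Hnd|]. split; [exact Hlen|]. split; [unfold b; simpl; discriminate|].
    apply Forall_forall. intros S HS. destruct (Hrh S HS) as [Y [E' Hin]].
    apply (Hok _ _ _ Hin). }
  assert (Hstd : standard (EqSys (fm b) (rh b))).
  { apply Forall_forall. intros S HS. destruct (Hrh S HS) as [Y [E' Hin]].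
    apply (Hok _ _ _ Hin). }
  exists (EqSys (fm b) (rh b)). split; [auto|]. split; [auto|]. split; [|split].
  - intros x Hx Hw. destruct (guard_closed Hwf Hstd Hw) as [A [HA HAc]].
    apply (Hk A) with x; auto. intros Y HY.
    destruct (HAc Y HY) as [i [Hi [HiY [P [HP HPl]]]]]. cbn [formals rhs] in Hi, HiY, HP.
    exists (nth i (rh b) NNil), (nth i (sl b) NNil). split.
    + rewrite <- HiY. apply nth_entry. lia.
    + left. exists P; auto.
  - intros v [Hv Hnf]. cbn [formals rhs] in Hv, Hnf. apply in_flat_map in Hv. destruct Hv as [S [HS Hv]].
    destruct (Hrh S HS) as [Y [E' Hin]].
    destruct (proj2 (proj2 (proj2 (Hok _ _ _ Hin))) v Hv); tauto.
  - exists (sl b). cbn [formals rhs]. split; [auto|]. split.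
    + apply Forall_forall. intros E' HE'. destruct (Hsl E' HE') as [Y [S Hin]].
      apply (Hok _ _ _ Hin).
    + split; [reflexivity|]. intros i Hi.
      assert (H := Hsat (@NFV L) (fun v => I) _ _ _ (@nth_entry L b i ltac:(lia))).
      rewrite !(proj1 fsubst_id_both) in H. exact H.
Qed.
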